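(* The Cutoff Price Mechanism described in the context is strategyproof: for each buyer with value $v$, it is a weakly dominant strategy to (i) in an inventory sale, accept the good if and only if $v$ is above the posted monopoly price; (ii) in a survival auction, drop out if and only if the clock price has reached $v$; and (iii) in an assignment auction, bid $v$.
   Context: Setting: goods arrive by a Poisson process (rate $\mu$) and unit-demand buyers by an independent Poisson process (rate $\lambda$), each with a private value $v\in[0,1]$; a buyer who obtains a good at price $P$ gets $v-P$ minus waiting costs, and waiting costs are reimbursed by the mechanism. Fix thresholds $\hat v_{-L^*}<\dots<\hat v_{-1}<\hat v_1<\dots<\hat v_{K^*}<1$, set $\hat v_k:=1$ for $k>K^*$ and $\hat v_0:=J^{-1}(0)$ where $J(v)=v-(1-F(v))/f(v)$. The buyer queue and goods inventory are never simultaneously nonempty. Cutoff Price Mechanism (CPM): each buyer $i$ has a personalized reserve $r_i$, initially $0$. (a) If a buyer arrives when $\ell\ge1$ goods are in inventory, the seller posts price $\hat v_{-\ell}$; the buyer buys or leaves. (b) A queued buyer is Active until his first assignment auction; after submitting bid $b$ there he becomes Passive and a Proxy Agent acts for him with fixed bid $b$: in later survival auctions it drops out (and the buyer is removed) when the clock exceeds $b$, and in later assignment auctions it bids $b$ (if the real buyer has left and the proxy later wins, the good is discarded). (c) If a buyer arrives when $k-1\ge0$ buyers are queued and no inventory, a survival auction starts with a common clock price rising from $\hat v_{k-1}$; active buyers decide continuously whether to stay; passive buyers' proxies drop out when the price exceeds their fixed bid; the auction ends when some buyer drops out or the price reaches $\hat v_k$; all remaining buyers stay and each survivor's reserve is updated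 to $r_i\leftarrow\max\{r_i,\text{stopped clock price}\}$. (d) If a good arrives and exactly one buyer is queued, he gets it and pays $r_i$. If several are queued, an assignment auction is held: each active buyer submits a sealed bid $b\ge r_i$, each passive buyer's proxy bids its fixed bid; the highest bidder wins (ties broken randomly) and pays his Cutoff Price, defined as the lowest bid $\mathcal B\ge r_i$ such that, had he adopted $\mathcal B$ as his fixed bid (represented by a proxy with bid $\mathcal B$ in all subsequent events), he would eventually win a good on the realized sample path of future arrivals; payment is collected once this is determined. (e) Buyers are reimbursed realized waiting costs. (f) Buyers' identities and bids are private, and buyers observe neither the queue nor its length. Weak dominance is with respect to all strategies of other buyers and all realizations of arrivals. *)

(* Defs.v *)
From HB Require Import structures.
From mathcomp Require Import all_boot all_order all_algebra.
From mathcomp Require Import boolp classical_sets reals.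

Set Implicit Arguments.
Unset Strict Implicit.
Unset Printing Implicit Defensive.

Import Order.TTheory GRing.Theory Num.Theory.
Local Open Scope ring_scope.

(* Deterministic, pathwise model of the Cutoff Price Mechanism (CPM).         *)
(* A realization of the arrival processes is a sequence of events [ev n]      *)
(* (a good, or a buyer with private value v) occurring at times [tm n];       *)
(* buyer "i" is identified with the index i of his arrival event.  The        *)
(* realization also fixes the random tie-breaking: in the assignment auction  *)
(* held at event n, ties in the highest bid are broken in favour of the       *)
(* buyer j with the largest priority [tb n j].                                *)

Section CPM.
Variable R : realType.

Inductive event := Good | Buyer of R.

(* What a buyer observes (his private history).  Buyers observe neither the  *)
(* queue nor its length, nor the identities / bids of others.                *)
Inductive obs :=
  | OArr of R            (* own arrival time *)
  | OSurv of R & R & R   (* survived a survival auction: time, start clock, stop clock *)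
  | OLost of R & R & R.  (* lost own first assignment auction: time, own bid, own reserve *)

(* - [accept h p]    : inventory sale at posted price p: buy or leave;        *)
(* - [drop_at h t s] : in a survival auction at time t whose clock starts at  *)
(*                     s, the clock price at which he drops out (the only     *)
(*                     thing he observes during the auction is the rising     *)
(*                     clock, so a continuous stopping decision is a price);  *)
(* - [bid h t]       : sealed bid in his first assignment auction at time t;  *)
(* - [leave h]       : after becoming passive (having lost his first          *)
(*                     assignment auction), the time at which the real buyer  *)
(*                     leaves (None = never); his proxy keeps acting.          *)
Record strategy := Strategy {
  accept : seq obs -> R -> bool;
  drop_at : seq obs -> R -> R -> R;
  bid : seq obs -> R -> R;
  leave : seq obs -> option R }.

Definition truthful (v : R) : strategy :=
  Strategy (fun _ p => p < v) (fun _ _ _ => v) (fun _ _ => v) (fun _ => None).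

Inductive status :=
  | Active
  | Passive of R & option R.  (* proxy's fixed bid, departure time of the real buyer *)

Record entry := Entry { eid : nat; eres : R; estat : status; ehist : seq obs }.

Record state := State { sinv : nat; squeue : seq entry }.

Inductive result :=
  | RBuy of R              (* bought from inventory at this price *)
  | RGood of R & bool      (* sole queued buyer got a good: price r_i, real buyer present? *)
  | RWin of R & bool.      (* won an assignment auction: reserve r_i, real buyer present? *)

Definition vhat (th : int -> R) (K : nat) (v0 : R) (k : int) : R :=
  if k == 0 then v0 else if (K%:Z < k)%R then 1 else th k.

Variables (vh : int -> R) (L : nat) (ev : nat -> event) (tm : nat -> R)
          (tb : nat -> nat -> nat) (sig : nat -> strategy).

(* Lexicographic order on drop points (x, b): b = true means "just after x" *)
(* (a proxy with bid x drops when the clock EXCEEDS x).                      *)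
Definition ltp (a b : R * bool) : bool :=
  (a.1 < b.1) || ((a.1 == b.1) && (~~ a.2 && b.2)).
Definition minp (a b : R * bool) : R * bool := if ltp b a then b else a.

Section Step.
(* [ov = Some (j, B)]: buyer j is represented by a proxy with fixed bid B *)
(* (used for the counterfactual defining the Cutoff Price).               *)
Variable ov : option (nat * R).

Definition eff_stat (e : entry) : status :=
  match ov with
  | Some (j, B) => if eid e == j then Passive B None else estat e
  | None => estat e
  end.

Definition present (e : entry) (t : R) : bool :=
  match eff_stat e with
  | Passive _ (Some d) => t < d
  | _ => true
  end.

Definition step (st : state) (n : nat) : state * seq (nat * result) :=
  let q := squeue st in
  let t := tm n in
  match ev n with
  | Buyer _ =>
    let l := sinv st in
    if (0 < l)%N then
      let p := vh (- (l%:Z)) in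
      if accept (sig n) [:: OArr t] p then (State l.-1 q, [:: (n, RBuy p)])
      else (st, [::])
    else
      let q' := rcons q (Entry n 0 Active [:: OArr t]) in
      let k := (size q).+1 in
      let s := vh (k.-1)%:Z in
      let cap := vh k%:Z in
      let point e :=
        match eff_stat e with
        | Active => (Num.max s (drop_at (sig (eid e)) (ehist e) t s), false)
        | Passive b _ => if b < s then (s, false) else (b, true)
        end in
      let endp := foldr minp (Num.max s cap, false) (map point q') in
      let pstar := endp.1 in
      let surv := [seq e <- q' | ltp endp (point e)] in
      let upd e := Entry (eid e) (Num.max (eres e) pstar) (estat e)
                         (rcons (ehist e) (OSurv t s pstar)) in
      (State 0 (map upd surv), [::])
  | Good =>
    match q with
    | [::] => (State (minn (sinv st).+1 L) [::], [::])   (* goods beyond L are discarded *)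
    | [:: e] => (State (sinv st) [::], [:: (eid e, RGood (eres e) (present e t))])
    | e0 :: q1 =>
      let bidof e :=
        match eff_stat e with
        | Active => Num.max (eres e) (bid (sig (eid e)) (ehist e) t)
        | Passive b _ => b
        end in
      let better e w :=
        (bidof w < bidof e) ||
        ((bidof w == bidof e) && (tb n (eid w) < tb n (eid e))%N) in
      let w := foldl (fun w e => if better e w then e else w) e0 q1 in
      let losers := [seq e <- q | eid e != eid w] in
      let upd e :=
        match estat e with
        | Active =>
          let b := bidof e in
          let h := rcons (ehist e) (OLost t b (eres e)) in
          Entry (eid e) (eres e) (Passive b (leave (sig (eid e)) h)) h
        | Passive _ _ => e
        end in
      (State (sinv st) (map upd losers), [:: (eid w, RWin (eres w) (present w t))])
    end
  end.
End Step.

(* state before event n, along the actual play *)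
Fixpoint run (n : nat) : state :=
  if n is m.+1 then (step None (run m) m).1 else State 0 [::].

Definition outcome (n i : nat) : option result :=
  ohead [seq x.2 | x <- (step None (run n) n).2 & x.1 == i].

(* counterfactual: from event k on, buyer j is a proxy with fixed bid B;    *)
(* [run_cf k j B m] is the state before event k + m.                        *)
Fixpoint run_cf (k j : nat) (B : R) (m : nat) : state :=
  if m is m'.+1 then (step (Some (j, B)) (run_cf k j B m') (k + m')).1 else run k.

Definition wins_cf (k j : nat) (B : R) : Prop :=
  exists m, has (fun x => x.1 == j)
                (step (Some (j, B)) (run_cf k j B m) (k + m)).2.

(* Cutoff Price of buyer j winning the assignment auction at event k with    *)
(* reserve r: the lowest bid B >= r with which he would eventually win.      *)
Definition cutoff (k j : nat) (r : R) : R :=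
  inf [set B | r <= B /\ wins_cf k j B].

(* Realized utility of buyer i of value v (waiting costs are reimbursed). *)
Definition payoff (i : nat) (v : R) : R :=
  match pselect (exists n, isSome (outcome n i)) with
  | left h =>
    let n := ex_minn h in
    match outcome n i with
    | Some (RBuy p) => v - p
    | Some (RGood p pres) => if pres then v - p else 0
    | Some (RWin r pres) => if pres then v - cutoff n i r else 0
    | None => 0
    end
  | right _ => 0
  end.

End CPM.

Definition upd_strat (R : realType) (sig : nat -> strategy R) (i : nat)
  (s : strategy R) : nat -> strategy R :=
  fun j => if j == i then s else sig j.

(* Main.v *)
Require Import Defs.
From HB Require Import structures.
From mathcomp Require Import all_boot all_order all_algebra.
From mathcomp Require Import boolp classical_sets reals.
From mathcomp Require Import lra.
Import Order.TTheory GRing.Theory Num.Theory.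
Local Open Scope ring_scope.

Module CPMProof.
Set Implicit Arguments.
Unset Strict Implicit.
Unset Printing Implicit Defensive.

Section Ord.
Variable R : realType.
Implicit Types a b c : R * bool.

Definition lep a b := ~~ ltp b a.

Lemma ltpxx a : ltp a a = false.
Proof. by case: a => x p; rewrite /ltp /= ltxx eqxx /=; case: p. Qed.

Lemma ltp_trans a b c : ltp a b -> ltp b c -> ltp a c.
Proof.
case: a b c => [x p] [y q] [z r]; rewrite /ltp /=.
case/orP=> [xy|/andP[/eqP <- pq]]; case/orP=> [yz|/andP[/eqP <- qr]].
- by rewrite (lt_trans xy yz).
- by rewrite xy.
- by rewrite yz.
- by rewrite ltxx eqxx /=; move: pq qr; case: p; case: q; case: r.
Qed.

Lemma ltp_total a b : a != b -> ltp a b || ltp b a.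
Proof.
case: a b => [x p] [y q]; rewrite /ltp /= => neq.
case: (ltgtP x y) => //= exy; subst y.
by move: neq; case: p; case: q; rewrite ?eqxx.
Qed.

Lemma lepNgt a b : lep a b = ~~ ltp b a. Proof. by []. Qed.

Lemma ltpW a b : ltp a b -> lep a b.
Proof. move=> h; apply/negP=> h2; have := ltp_trans h h2; by rewrite ltpxx. Qed.

Lemma lepxx a : lep a a. Proof. by rewrite /lep ltpxx. Qed.

Lemma lep_total a b : lep a b || lep b a.
Proof.
rewrite /lep -negb_and; apply/negP => /andP[h1 h2].
by have := ltp_trans h1 h2; rewrite ltpxx.
Qed.

Lemma lep_ltp_trans a b c : lep a b -> ltp b c -> ltp a c.
Proof.
move=> ab bc; case: (eqVneq a b) => [->//|ne].
case/orP: (ltp_total ne) => h; first exact: ltp_trans h bc.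
by rewrite /lep h in ab.
Qed.

Lemma ltp_lep_trans a b c : ltp a b -> lep b c -> ltp a c.
Proof.
move=> ab bc; case: (eqVneq b c) => [<-//|ne].
case/orP: (ltp_total ne) => h; first exact: ltp_trans ab h.
by rewrite /lep h in bc.
Qed.

Lemma lep_trans a b c : lep a b -> lep b c -> lep a c.
Proof.
move=> ab bc; apply/negP => ca.
have := lep_ltp_trans bc ca; by rewrite /lep in ab => /(negP ab).
Qed.

Lemma lep_anti a b : lep a b -> lep b a -> a = b.
Proof.
move=> ab ba; case: (eqVneq a b) => // ne.
by case/orP: (ltp_total ne) => h; [rewrite /lep h in ba|rewrite /lep h in ab].
Qed.

Lemma lep_fst a b : lep a b -> a.1 <= b.1.
Proof.
case: a b => [x p] [y q]; rewrite /lep /ltp /= negb_or => /andP[h _].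
by rewrite leNgt.
Qed.

Lemma ltp_fst a b : ltp a b -> a.1 <= b.1.
Proof. by move/ltpW/lep_fst. Qed.

Lemma minpE a b : minp a b = if ltp b a then b else a. Proof. by []. Qed.

Lemma minp_l a b : lep (minp a b) a.
Proof. rewrite /minp; case: ifP => h; [exact: ltpW|exact: lepxx]. Qed.

Lemma minp_r a b : lep (minp a b) b.
Proof. rewrite /minp; case: ifP => h; first exact: lepxx. by rewrite /lep h. Qed.

Lemma minp_glb a b c : lep c a -> lep c b -> lep c (minp a b).
Proof. by rewrite /minp; case: ifP. Qed.

Lemma minp_mono a b a' b' : lep a a' -> lep b b' -> lep (minp a b) (minp a' b').
Proof.
move=> h1 h2; apply: minp_glb.
- exact: lep_trans (minp_l _ _) h1.
- exact: lep_trans (minp_r _ _) h2.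
Qed.

Lemma minp_ltp a b : ltp a b -> minp a b = a.
Proof. by rewrite /minp => h; rewrite (negbTE (ltpW h)) /= ?ifF //; apply/negbTE; rewrite -/(lep a b) ltpW. Qed.

Lemma minp_lep a b : lep b a -> minp a b = b.
Proof.
rewrite /minp => h; case: ifP => // nb.
apply: lep_anti => //; by rewrite /lep nb.
Qed.

End Ord.

Section Main.
Variable R : realType.
Variables (vh : int -> R) (L : nat) (ev : nat -> event R) (tm : nat -> R)
          (tb : nat -> nat -> nat) (i : nat).

Notation entry := (entry R).
Notation state := (state R).
Notation strategy := (strategy R).

Definition stp (sg : nat -> strategy) ov st n := step vh L ev tm tb sg ov st n.

Fixpoint iter sg ov st k m : state :=
  if m is m'.+1 then (stp sg ov (iter sg ov st k m') (k + m')).1 else st.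

Definition res sg ov st k m := (stp sg ov (iter sg ov st k m) (k + m)).2.

Definition ids (l : seq (nat * result R)) := [seq x.1 | x <- l].

Lemma iter_add sg ov st k m1 m2 :
  iter sg ov st k (m1 + m2) = iter sg ov (iter sg ov st k m1) (k + m1) m2.
Proof. by elim: m2 => [|m IH]; rewrite ?addn0 // addnS /= IH addnA. Qed.

Lemma res_add sg ov st k m1 m2 :
  res sg ov st k (m1 + m2) = res sg ov (iter sg ov st k m1) (k + m1) m2.
Proof. by rewrite /res iter_add addnA. Qed.

Definition run' sg n := run vh L ev tm tb sg n.

Lemma run_add sg k m : run' sg (k + m) = iter sg None (run' sg k) k m.
Proof. by elim: m => [|m IH]; rewrite ?addn0 // addnS /= -IH. Qed.

Lemma run_cfE sg k B m :
  run_cf vh L ev tm tb sg k i B m = iter sg (Some (i, B)) (run' sg k) k m.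
Proof. by elim: m => [|m IH] //=; rewrite IH. Qed.

Lemma has_ids (l : seq (nat * result R)) j : has (fun x => x.1 == j) l = (j \in ids l).
Proof. by elim: l => [|[a b] l IH] //=; rewrite in_cons IH eq_sym. Qed.

Lemma wins_cfE sg k B :
  wins_cf vh L ev tm tb sg k i B <-> exists m, i \in ids (res sg (Some (i, B)) (run' sg k) k m).
Proof.
split=> [[m h]|[m h]]; exists m; move: h; by rewrite has_ids /res run_cfE.
Qed.

Lemma outcomeE sg n :
  outcome vh L ev tm tb sg n i =
  ohead [seq x.2 | x <- (stp sg None (run' sg n) n).2 & x.1 == i].
Proof. by []. Qed.

Fixpoint pw (P : entry -> entry -> Prop) (q1 q2 : seq entry) : Prop :=
  match q1, q2 with
  | [::], [::] => True
  | e1 :: q1, e2 :: q2 => P e1 e2 /\ pw P q1 q2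
  | _, _ => False
  end.

Lemma pw_impl (P Q : entry -> entry -> Prop) q1 q2 :
  (forall a b, P a b -> Q a b) -> pw P q1 q2 -> pw Q q1 q2.
Proof. move=> h; elim: q1 q2 => [|a q1 IH] [|b q2] //= [/h ? /IH ?]; by split. Qed.

Lemma pw_size P q1 q2 : pw P q1 q2 -> size q1 = size q2.
Proof. by elim: q1 q2 => [|a q1 IH] [|b q2] //= [_ /IH ->]. Qed.

Lemma pw_filter (P : entry -> entry -> Prop) (f1 f2 : pred entry) q1 q2 :
  (forall a b, P a b -> f1 a = f2 b) -> pw P q1 q2 ->
  pw P [seq e <- q1 | f1 e] [seq e <- q2 | f2 e].
Proof.
move=> h; elim: q1 q2 => [|a q1 IH] [|b q2] //= [Pab /IH ?].
by rewrite (h _ _ Pab); case: (f2 b) => //=.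
Qed.

Lemma pw_map (P Q : entry -> entry -> Prop) (g1 g2 : entry -> entry) q1 q2 :
  (forall a b, P a b -> Q (g1 a) (g2 b)) -> pw P q1 q2 -> pw Q (map g1 q1) (map g2 q2).
Proof. move=> h; elim: q1 q2 => [|a q1 IH] [|b q2] //= [/h ? /IH ?]; by split. Qed.

Lemma pw_rcons P q1 q2 a b : pw P q1 q2 -> P a b -> pw P (rcons q1 a) (rcons q2 b).
Proof. by elim: q1 q2 => [|x q1 IH] [|y q2] //= [? /IH h] /h. Qed.

Lemma pw_in2 P q1 q2 b : pw P q1 q2 -> List.In b q2 -> exists a, List.In a q1 /\ P a b.
Proof.
elim: q1 q2 => [|a q1 IH] [|c q2] //= [Pac h] [<-|hb]; first by exists a; split; [left|].
by case: (IH _ h hb) => x [? ?]; exists x; split; [right|].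
Qed.

Lemma pw_in1 P q1 q2 a : pw P q1 q2 -> List.In a q1 -> exists b, List.In b q2 /\ P a b.
Proof.
elim: q1 q2 => [|x q1 IH] [|c q2] //= [Pac h] [<-|hb]; first by exists c; split; [left|].
by case: (IH _ h hb) => y [? ?]; exists y; split; [right|].
Qed.

Lemma pw_refl (P : entry -> entry -> Prop) q : (forall a, List.In a q -> P a a) -> pw P q q.
Proof.
elim: q => [|a q IH] //= h; split; first by apply: h; left.
by apply: IH => b hb; apply: h; right.
Qed.

Lemma pw_eq (P : entry -> entry -> Prop) q1 q2 : (forall a b, P a b -> a = b) -> pw P q1 q2 -> q1 = q2.
Proof. by move=> h; elim: q1 q2 => [|a q1 IH] [|b q2] //= [/h -> /IH ->]. Qed.

Lemma pw_sym (P Q : entry -> entry -> Prop) q1 q2 :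
  (forall a b, P a b -> Q b a) -> pw P q1 q2 -> pw Q q2 q1.
Proof. move=> h; elim: q1 q2 => [|a q1 IH] [|b q2] //= [/h ? /IH ?]; by split. Qed.

Lemma pw_and (P Q : entry -> entry -> Prop) q1 q2 : pw P q1 q2 ->
  (forall a b, List.In a q1 -> List.In b q2 -> P a b -> Q a b) -> pw Q q1 q2.
Proof.
elim: q1 q2 => [|a q1 IH] [|b q2] //= [Pab h] H; split.
- by apply: H => //; left.
- by apply: IH => // x y hx hy; apply: H; right.
Qed.

Lemma In_rcons (a b : entry) q : List.In a (rcons q b) -> List.In a q \/ a = b.
Proof.
elim: q => [|x q IH] /=; first by case=> [->|[]]; right.
case=> [->|h]; first by left; left.
by case: (IH h) => [?|?]; [left; right|right].
Qed.

Lemma In_filter (a : entry) (f : pred entry) q : List.In a [seq e <- q | f e] -> List.In a q /\ f a.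
Proof.
elim: q => [|x q IH] //=; case: ifP => fx /=.
- by case=> [<-|/IH[]]; auto.
- by move/IH=> []; auto.
Qed.

Lemma In_map (a : entry) (g : entry -> entry) q : List.In a (map g q) -> exists b, List.In b q /\ a = g b.
Proof. elim: q => [|x q IH] //= [<-|/IH[b [? ->]]]; [exists x|exists b]; auto. Qed.

Lemma In_foldl (f : entry -> entry -> entry) (e0 : entry) q :
  (forall w e, f w e = w \/ f w e = e) -> List.In (foldl f e0 q) (e0 :: q).
Proof.
move=> hf; elim: q e0 => [|x q IH] e0 /=; first by left.
case: (hf e0 x) => ->.
- by case: (IH e0) => h; [left|right; right].
- by right; apply: IH.
Qed.



Definition bidof sg ov n (e : entry) : R :=
  match eff_stat ov e with
  | Active => Num.max (eres e) (bid (sg (eid e)) (ehist e) (tm n))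
  | Passive b _ => b
  end.

Definition better sg ov n (e w : entry) : bool :=
  (bidof sg ov n w < bidof sg ov n e) ||
  ((bidof sg ov n w == bidof sg ov n e) && (tb n (eid w) < tb n (eid e))%N).

Definition winner sg ov n (e0 : entry) q1 :=
  foldl (fun w e => if better sg ov n e w then e else w) e0 q1.

Definition updL sg ov n (e : entry) : entry :=
  match estat e with
  | Active =>
    let b := bidof sg ov n e in
    let h := rcons (ehist e) (OLost (tm n) b (eres e)) in
    Entry (eid e) (eres e) (Passive b (leave (sg (eid e)) h)) h
  | Passive _ _ => e
  end.

Definition point sg ov n (s : R) (e : entry) : R * bool :=
  match eff_stat ov e with
  | Active => (Num.max s (drop_at (sg (eid e)) (ehist e) (tm n) s), false)
  | Passive b _ => if b < s then (s, false) else (b, true)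
  end.

Definition updS n (s p : R) (e : entry) : entry :=
  Entry (eid e) (Num.max (eres e) p) (estat e) (rcons (ehist e) (OSurv (tm n) s p)).

Definition newE n : entry := Entry n 0 (Active R) [:: OArr (tm n)].

Lemma stp_inv sg ov st n w : ev n = Buyer w -> (0 < sinv st)%N ->
  stp sg ov st n =
  if accept (sg n) [:: OArr (tm n)] (vh (- (sinv st)%:Z))
  then (State (sinv st).-1 (squeue st), [:: (n, RBuy (vh (- (sinv st)%:Z)))])
  else (st, [::]).
Proof. by rewrite /stp /step => -> ->. Qed.

Lemma stp_surv sg ov st n w : ev n = Buyer w -> sinv st = 0%N ->
  stp sg ov st n =
  let q' := rcons (squeue st) (newE n) in
  let s := vh (size (squeue st))%:Z in
  let cap := vh (size (squeue st)).+1%:Z in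
  let E := foldr (@minp R) (Num.max s cap, false) (map (point sg ov n s) q') in
  (State 0 (map (updS n s E.1) [seq e <- q' | ltp E (point sg ov n s e)]), [::]).
Proof. by rewrite /stp /step => -> ->. Qed.

Lemma stp_good0 sg ov st n : ev n = Good R -> squeue st = [::] ->
  stp sg ov st n = (State (minn (sinv st).+1 L) [::], [::]).
Proof. by rewrite /stp /step => -> ->. Qed.

Lemma stp_good1 sg ov st n e : ev n = Good R -> squeue st = [:: e] ->
  stp sg ov st n = (State (sinv st) [::], [:: (eid e, RGood (eres e) (present ov e (tm n)))]).
Proof. by rewrite /stp /step => -> ->. Qed.

Lemma stp_good2 sg ov st n e0 e1 q : ev n = Good R -> squeue st = e0 :: e1 :: q ->
  stp sg ov st n =
  (State (sinv st) (map (updL sg ov n)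
     [seq e <- e0 :: e1 :: q | eid e != eid (winner sg ov n e0 (e1 :: q))]),
   [:: (eid (winner sg ov n e0 (e1 :: q)),
        RWin (eres (winner sg ov n e0 (e1 :: q))) (present ov (winner sg ov n e0 (e1 :: q)) (tm n)))]).
Proof. by rewrite /stp /step => -> ->. Qed.

Lemma neq_ne (x y : nat) : x != y -> x <> y.
Proof. by move=> h e; rewrite e eqxx in h. Qed.

Lemma foldr_lb (lo init : R * bool) (f : entry -> R * bool) q :
  lep lo init -> (forall a, List.In a q -> lep lo (f a)) ->
  lep lo (foldr (@minp R) init (map f q)).
Proof.
move=> h0; elim: q => [|a q IH] //= h; apply: minp_glb; first by apply: h; left.
by apply: IH => b hb; apply: h; right.
Qed.

Lemma min2 (Rl : entry -> entry -> Prop) (f1 f2 : entry -> R * bool) (P1 P2 init : R * bool) q1 q2 :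
  lep P1 P2 -> pw Rl q1 q2 ->
  (forall a b, Rl a b -> (eid a = i -> f1 a = P1 /\ f2 b = P2) /\ (eid a <> i -> f1 a = f2 b)) ->
  foldr (@minp R) init (map f1 q1) = foldr (@minp R) init (map f2 q2) \/
  (foldr (@minp R) init (map f1 q1) = P1 /\ lep P1 (foldr (@minp R) init (map f2 q2))).
Proof.
move=> P12 + H; elim: q1 q2 => [|a q1 IH] [|b q2] //=; first by left.
case=> Rab /IH{}IH; have [Hi Hn] := H _ _ Rab.
set m1 := foldr _ _ (map f1 q1) in IH *; set m2 := foldr _ _ (map f2 q2) in IH *.
case: (eqVneq (eid a) i) => [ai|ani].
- have [-> ->] := Hi ai.
  case: IH => [<-|[-> hm2]].
  + case: (boolP (ltp m1 P1)) => h.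
    * left; rewrite /minp h; have h2 : ltp m1 P2 := ltp_lep_trans h P12.
      by rewrite h2.
    * right; split; first by rewrite /minp (negbTE h).
      apply: minp_glb => //; by rewrite /lep.
  + right; split; first by rewrite /minp ltpxx.
    by apply: minp_glb.
- have := Hn (neq_ne ani) => <-.
  case: IH => [<-|[-> hm2]]; first by left.
  set x := f1 a.
  case: (boolP (ltp P1 x)) => h.
  + right; split; first by rewrite /minp h.
    apply: minp_glb => //; exact: ltpW.
  + left; rewrite /minp (negbTE h).
    have : lep x m2 := lep_trans (h : lep x P1) hm2.
    by rewrite /lep => /negbTE ->.
Qed.

Definition lx (a b : R * nat) := (a.1 < b.1) || ((a.1 == b.1) && (a.2 < b.2)%N).

Lemma lx_irr a : lx a a = false.
Proof. by rewrite /lx ltxx eqxx ltnn. Qed.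

Lemma lx_asym a b : lx a b -> ~~ lx b a.
Proof.
case: a b => [x s] [y t]; rewrite /lx /=.
case: (ltgtP x y) => //= _ st.
by rewrite -leqNgt ltnW.
Qed.

Lemma lx_le_lt a b c : ~~ lx b a -> lx b c -> lx a c.
Proof.
case: a b c => [x s] [y t] [z u]; rewrite /lx /= negb_or negb_and -!leNgt -leqNgt.
case/andP=> xy hxy; case/orP=> [yz|/andP[/eqP <- tu]].
- by rewrite (le_lt_trans xy yz).
- case: (ltgtP x y) xy hxy => //= _ _ st.
  exact: leq_ltn_trans st tu.
Qed.

Lemma lx_monol x1 x2 t c : lx (x2, t) c -> x1 <= x2 -> lx (x1, t) c.
Proof.
case: c => [z u]; rewrite /lx /= => + x12; case/orP=> [h|/andP[/eqP <- h]].
- by rewrite (le_lt_trans x12 h).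
- by case: (ltgtP x1 x2) x12.
Qed.

Lemma lx_monor x1 x2 t c : lx c (x1, t) -> x1 <= x2 -> lx c (x2, t).
Proof.
case: c => [z u]; rewrite /lx /= => + x12; case/orP=> [h|/andP[/eqP -> h]].
- by rewrite (lt_le_trans h x12).
- by case: (ltgtP x1 x2) x12 => //= _ _; rewrite ?eqxx h orbT.
Qed.

Lemma betterE sg ov n e w :
  better sg ov n e w = lx (bidof sg ov n w, tb n (eid w)) (bidof sg ov n e, tb n (eid e)).
Proof. by []. Qed.

Section Winner.
Variables (sg1 sg2 : nat -> strategy) (ov1 ov2 : option (nat * R)) (n : nat) (B1 B2 : R).
Hypothesis B12 : B1 <= B2.
Variable Rl : entry -> entry -> Prop.
Hypothesis HRl : forall a b, Rl a b -> eid a = eid b /\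
  (eid a = i -> bidof sg1 ov1 n a = B1 /\ bidof sg2 ov2 n b = B2) /\
  (eid a <> i -> a = b /\ bidof sg1 ov1 n a = bidof sg2 ov2 n a).

Local Notation bo1 := (bidof sg1 ov1 n).
Local Notation bo2 := (bidof sg2 ov2 n).

Definition Jw (w1 w2 : entry) :=
  (eid w1 = eid w2 /\ (eid w1 <> i -> w1 = w2 /\ bo1 w1 = bo2 w1) /\
     (eid w1 = i -> bo1 w1 = B1 /\ bo2 w2 = B2)) \/
  (eid w2 = i /\ bo2 w2 = B2 /\ eid w1 <> i /\ bo1 w1 = bo2 w1 /\
     ~~ better sg2 ov2 n w1 w2).

Lemma Jw_n e : eid e <> i -> bo1 e = bo2 e -> Jw e e.
Proof. by move=> h1 h2; left; split=> //; split=> // /h1. Qed.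

Lemma Jw_i a b : eid a = i -> eid b = i -> bo1 a = B1 -> bo2 b = B2 -> Jw a b.
Proof. by move=> ha hb h1 h2; left; rewrite ha hb; split=> //; split. Qed.

Lemma Jw_step w1 w2 a b : Jw w1 w2 -> Rl a b ->
  Jw (if better sg1 ov1 n a w1 then a else w1) (if better sg2 ov2 n b w2 then b else w2).
Proof.
move=> J Rab; have [eab [Hi Hn]] := HRl Rab.
rewrite !betterE.
case: J => [[ew [Hwn Hwi]]|[w2i [bw2 [w1n [bw1 nb]]]]].
- case: (eqVneq (eid w1) i) => [w1i|w1n].
  + have [b1 b2] := Hwi w1i; have w2i : eid w2 = i by rewrite -ew.
    case: (eqVneq (eid a) i) => [ai|an].
    * have [ba bb] := Hi ai; have bi : eid b = i by rewrite -eab.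
      rewrite b1 ba b2 bb w1i w2i ai bi !lx_irr; exact: Jw_i.
    * have [<- ban] := Hn (neq_ne an).
      rewrite b1 b2 w1i w2i.
      case c2: (lx (B2, tb n i) (bo2 a, tb n (eid a))).
      - have -> : lx (B1, tb n i) (bo1 a, tb n (eid a)).
          by rewrite ban; exact: lx_monol c2 B12.
        exact: Jw_n (neq_ne an) ban.
      - case c1: (lx (B1, tb n i) (bo1 a, tb n (eid a))).
        -- right; split=> //; split=> //; split; first exact: neq_ne an.
           split=> //; by rewrite betterE b2 w2i c2.
        -- by left; split=> //; split.
  + have [ew' bw] := Hwn (neq_ne w1n); subst w2.
    case: (eqVneq (eid a) i) => [ai|an].
    * have [ba bb] := Hi ai; have bi : eid b = i by rewrite -eab.
      rewrite ba bb ai bi.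
      case c1: (lx (bo1 w1, tb n (eid w1)) (B1, tb n i)).
      - have -> : lx (bo2 w1, tb n (eid w1)) (B2, tb n i).
          by rewrite -bw; exact: lx_monor c1 B12.
        exact: Jw_i.
      - case c2: (lx (bo2 w1, tb n (eid w1)) (B2, tb n i)).
        -- right; split=> //; split=> //; split; first exact: neq_ne w1n.
           split=> //; rewrite betterE bb bi; exact: lx_asym c2.
        -- exact: Jw_n (neq_ne w1n) bw.
    * have [<- ban] := Hn (neq_ne an).
      rewrite -bw -ban; case: ifP => _.
      -- exact: Jw_n (neq_ne an) ban.
      -- exact: Jw_n (neq_ne w1n) bw.
- case: (eqVneq (eid a) i) => [ai|an].
  + have [ba bb] := Hi ai; have bi : eid b = i by rewrite -eab.
    rewrite bb bi bw2 w2i lx_irr.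
    case: ifP => _.
    * exact: Jw_i.
    * by right; split=> //; split=> //; split.
  + have [<- ban] := Hn (neq_ne an).
    rewrite w2i bw2; case c2: (lx (B2, tb n i) (bo2 a, tb n (eid a))).
    * have -> : lx (bo1 w1, tb n (eid w1)) (bo1 a, tb n (eid a)).
        rewrite bw1 ban; apply: lx_le_lt c2.
        by move: nb; rewrite betterE bw2 w2i.
      exact: Jw_n (neq_ne an) ban.
    * case: ifP => _.
      -- right; split=> //; split=> //; split; first exact: neq_ne an.
         split=> //; by rewrite betterE bw2 w2i c2.
      -- by right; split=> //; split=> //; split.
Qed.

Lemma Jw_fold q1 q2 w1 w2 : pw Rl q1 q2 -> Jw w1 w2 ->
  Jw (foldl (fun w e => if better sg1 ov1 n e w then e else w) w1 q1)
     (foldl (fun w e => if better sg2 ov2 n e w then e else w) w2 q2).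
Proof.
elim: q1 q2 w1 w2 => [|a q1 IH] [|b q2] //= w1 w2 [Rab h] J.
by apply: IH => //; apply: Jw_step.
Qed.

Lemma winner_rel e01 e02 q1 q2 : pw Rl (e01 :: q1) (e02 :: q2) ->
  let w1 := winner sg1 ov1 n e01 q1 in let w2 := winner sg2 ov2 n e02 q2 in
  (eid w1 = eid w2 /\ (eid w1 <> i -> w1 = w2)) \/ (eid w2 = i /\ eid w1 <> i).
Proof.
move=> [R0 h] /=.
have J0 : Jw e01 e02.
  have [e [Hi Hn]] := HRl R0; left; split=> //; split=> // /Hn [-> ->]; by split.
case: (Jw_fold h J0) => [[? [H _]]|[? [_ [? _]]]].
- by left; split=> // /H [].
- by right.
Qed.

End Winner.

Definition ovok (ov : option (nat * R)) := forall j B, ov = Some (j, B) -> j = i.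

Lemma ovok_None : ovok None. Proof. by []. Qed.
Lemma ovok_Some B : ovok (Some (i, B)). Proof. by move=> j B' [->]. Qed.

Lemma eff_nonI ov (e : entry) : ovok ov -> eid e <> i -> eff_stat ov e = estat e.
Proof.
case: ov => [[j B]|] // /(_ j B erefl) -> ne; rewrite /eff_stat.
by case: eqP.
Qed.

Lemma eff_I B (e : entry) : eid e = i -> eff_stat (Some (i, B)) e = Passive B None.
Proof. by move=> h; rewrite /eff_stat h eqxx. Qed.

Definition erel (a b : entry) :=
  eid a = eid b /\ (eid a = i -> eres a = eres b) /\ (eid a <> i -> a = b).

Definition IP ov sg n B (e : entry) :=
  eid e = i -> eres e <= B /\
  ((exists d, eff_stat ov e = Passive B d) \/
   (eff_stat ov e = Active R /\ ev n = Good R /\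
    Num.max (eres e) (bid (sg i) (ehist e) (tm n)) = B)).

Definition CR ov1 sg1 B1 ov2 sg2 B2 n a b :=
  erel a b /\ IP ov1 sg1 n B1 a /\ IP ov2 sg2 n B2 b.

Definition Cpl ov1 sg1 B1 ov2 sg2 B2 n (st1 st2 : state) :=
  sinv st1 = sinv st2 /\ pw (CR ov1 sg1 B1 ov2 sg2 B2 n) (squeue st1) (squeue st2).

Definition absent (st : state) := forall e, List.In e (squeue st) -> eid e <> i.

Lemma IP_shift ov sg n m B e : ev n <> Good R -> IP ov sg n B e -> IP ov sg m B e.
Proof. by move=> hn h /h [? [?|[_ [? _]]]]; split=> //; left. Qed.

Lemma eff_updS ov n s p e : eff_stat ov (updS n s p e) = eff_stat ov e.
Proof. by case: ov => [[j B]|]. Qed.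

Definition pt (B s : R) : R * bool := if B < s then (s, false) else (B, true).

Lemma point_passive sg ov n s e B d :
  eff_stat ov e = Passive B d -> point sg ov n s e = pt B s.
Proof. by rewrite /point => ->. Qed.

Lemma pt_mono B1 B2 s : B1 <= B2 -> lep (pt B1 s) (pt B2 s).
Proof.
rewrite /pt /lep /ltp => h; case: ifP => h1; case: ifP => h2 /=.
- by rewrite ltxx andbF.
- by move: (le_lt_trans h h1); rewrite h2.
- by rewrite h1 andbF.
- by rewrite andbF orbF -leNgt.
Qed.

Lemma pt_lt B1 B2 s : ltp (pt B1 s) (pt B2 s) -> B1 < B2.
Proof.
rewrite /pt /ltp; case: ifP => h1; case: ifP => h2 /=.
- by rewrite ltxx eqxx.
- by case/orP=> [h|/andP[/eqP <-]]; [rewrite (lt_trans h1 h)|rewrite h1].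
- move=> h; have : s <= B1 by rewrite leNgt h1.
  case/orP: h => [h|/andP[_ //]]; move=> sB1; by have := lt_le_trans h sB1; rewrite ltxx.
- by case/orP=> [//|/andP[_ //]].
Qed.

Lemma pt_fst B s : B <= (pt B s).1.
Proof. by rewrite /pt; case: ifP => h //=; exact: ltW. Qed.

Lemma pt_ge B s : lep (s, false) (pt B s).
Proof.
rewrite /pt /lep /ltp; case: ifP => h /=; first by rewrite ltxx eqxx.
by rewrite h /=; case: (B == s).
Qed.

Lemma pt_ltp_inv E B s : lep (s, false) E -> ltp E (pt B s) -> s <= B /\ E.1 <= B.
Proof.
rewrite /pt; case: ifP => h hE hl; first by have := lep_ltp_trans hE hl; rewrite ltpxx.
by split; [rewrite leNgt h|exact: ltp_fst hl].
Qed.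

Lemma point_ge sg ov n s e : lep (s, false) (point sg ov n s e).
Proof.
rewrite /point; case: (eff_stat ov e) => [|b d]; last exact: pt_ge.
by rewrite /lep /ltp /= andbF orbF -leNgt le_max lexx.
Qed.

Lemma init_ge (s c : R) : lep (s, false) (Num.max s c, false).
Proof. by rewrite /lep /ltp /= andbF orbF -leNgt le_max lexx. Qed.

Lemma IP_bidof ov sg n B e : ovok ov -> eid e = i -> IP ov sg n B e -> bidof sg ov n e = B.
Proof.
move=> ok ei /(_ ei) [_ [[d h]|[h [_ hb]]]]; rewrite /bidof h //.
by rewrite ei.
Qed.

Lemma bidof_nonI sg1 sg2 ov1 ov2 n e : ovok ov1 -> ovok ov2 ->
  (forall j, j <> i -> sg1 j = sg2 j) -> eid e <> i ->
  bidof sg1 ov1 n e = bidof sg2 ov2 n e.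
Proof.
move=> o1 o2 hs ne; rewrite /bidof (eff_nonI o1 ne) (eff_nonI o2 ne).
by rewrite (hs _ ne).
Qed.

Lemma point_nonI sg1 sg2 ov1 ov2 n s e : ovok ov1 -> ovok ov2 ->
  (forall j, j <> i -> sg1 j = sg2 j) -> eid e <> i ->
  point sg1 ov1 n s e = point sg2 ov2 n s e.
Proof.
move=> o1 o2 hs ne; rewrite /point (eff_nonI o1 ne) (eff_nonI o2 ne).
by rewrite (hs _ ne).
Qed.

Lemma IP_updL ov sg n m B e : ovok ov -> IP ov sg n B e -> IP ov sg m B (updL sg ov n e).
Proof.
move=> ok h; rewrite /updL; case E: (estat e) => [|b d] /=.
- move=> /= ei; have [hr hs] := h ei; split=> //; left.
  destruct ov as [[j B']|].
  + have ji := ok _ _ erefl; subst j.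
    exists None; rewrite /eff_stat /= ei eqxx.
    by move: hs; rewrite /eff_stat ei eqxx; case=> [[d' [->]]|[]].
  + exists (leave (sg (eid e)) (rcons (ehist e) (OLost (tm n) (bidof sg None n e) (eres e)))).
    rewrite /eff_stat /=; congr Passive; exact: IP_bidof ok ei h.
- move=> /= ei; have [hr hs] := h ei; split=> //; left.
  case: hs => [//|[hA _]]; exfalso.
  destruct ov as [[j B']|]; move: hA; rewrite /eff_stat ?E //.
  by rewrite ei (ok _ _ erefl) eqxx.
Qed.

Lemma eid_updL sg ov n e : eid (updL sg ov n e) = eid e.
Proof. by rewrite /updL; case: (estat e). Qed.
Lemma eres_updL sg ov n e : eres (updL sg ov n e) = eres e.
Proof. by rewrite /updL; case: (estat e). Qed.

Lemma sim_step sg1 sg2 ov1 ov2 B1 B2 n st1 st2 :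
  ovok ov1 -> ovok ov2 -> (forall j, j <> i -> sg1 j = sg2 j) -> n <> i -> B1 <= B2 ->
  Cpl ov1 sg1 B1 ov2 sg2 B2 n st1 st2 ->
  (Cpl ov1 sg1 B1 ov2 sg2 B2 n.+1 (stp sg1 ov1 st1 n).1 (stp sg2 ov2 st2 n).1 /\
     ids (stp sg1 ov1 st1 n).2 = ids (stp sg2 ov2 st2 n).2)
  \/ (i \in ids (stp sg2 ov2 st2 n).2 /\ i \notin ids (stp sg1 ov1 st1 n).2)
  \/ (absent (stp sg1 ov1 st1 n).1 /\ (stp sg1 ov1 st1 n).2 = [::] /\
      (stp sg2 ov2 st2 n).2 = [::] /\
      (forall e, List.In e (squeue (stp sg2 ov2 st2 n).1) -> eid e = i ->
         B1 <= eres e /\ B1 < B2)).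
Proof.
move=> o1 o2 hs ni B12 [hv hq].
case E: (ev n) => [|w].
-
  move: hq; case Q: (squeue st1) => [|a [|a' q1]]; case Q2: (squeue st2) => [|b [|b' q2]] //= hq;
    try by case: hq => _ [].
  + rewrite (stp_good0 _ _ E Q) (stp_good0 _ _ E Q2) hv; left; by split.
  + rewrite (stp_good1 _ _ E Q) (stp_good1 _ _ E Q2) /=; left; split; first by split.
    by case: hq => [[[eab _] _] _]; rewrite eab.
  + rewrite (stp_good2 _ _ E Q) (stp_good2 _ _ E Q2) /=.
    have HRl : forall x y, CR ov1 sg1 B1 ov2 sg2 B2 n x y -> eid x = eid y /\
        (eid x = i -> bidof sg1 ov1 n x = B1 /\ bidof sg2 ov2 n y = B2) /\
        (eid x <> i -> x = y /\ bidof sg1 ov1 n x = bidof sg2 ov2 n x).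
      move=> x y [[exy [_ hn]] [h1 h2]]; split=> //; split=> [xi|xn].
      * split; first exact: IP_bidof o1 xi h1.
        by apply: IP_bidof o2 _ h2; rewrite -exy.
      * by split; [exact: hn|exact: bidof_nonI _ o1 o2 hs xn].
    have hq2 : pw (CR ov1 sg1 B1 ov2 sg2 B2 n) (a :: a' :: q1) (b :: b' :: q2) by [].
    case: (winner_rel B12 HRl hq2) => [[ew _]|[w2i w1n]].
    * left; split; last by rewrite /= ew.
      split=> //=.
      apply: pw_map (pw_filter _ hq2); last first.
        by move=> x y [[exy _] _]; rewrite exy ew.
      move=> x y [[exy [hr hn]] [h1 h2]]; split; last by split; exact: IP_updL.
      split; first by rewrite !eid_updL.
      split=> [xi|xn]; first by rewrite !eres_updL hr // -(eid_updL sg1 ov1 n).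
      rewrite eid_updL in xn; rewrite -(hn xn) /updL (bidof_nonI _ o1 o2 hs xn).
      by rewrite (hs _ xn).
    * right; left; rewrite /= w2i !inE eqxx; split=> //.
      by apply/eqP => h; apply: w1n; rewrite -h.
-
  have nG : ev n <> Good R by rewrite E.
  have shift : forall a b, CR ov1 sg1 B1 ov2 sg2 B2 n a b -> CR ov1 sg1 B1 ov2 sg2 B2 n.+1 a b.
    by move=> a b [? [h1 h2]]; split=> //; split; apply: IP_shift nG _.
  case: (posnP (sinv st1)) => [z|p].
  +
    have z2 : sinv st2 = 0%N by rewrite -hv.
    rewrite (stp_surv _ _ E z) (stp_surv _ _ E z2) /=.
    have hsz : size (squeue st1) = size (squeue st2) := pw_size hq.
    rewrite -hsz.
    set s := vh (size (squeue st1))%:Z.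
    set init := (Num.max s _, false).
    set f1 := point sg1 ov1 n s. set f2 := point sg2 ov2 n s.
    have hq' : pw (CR ov1 sg1 B1 ov2 sg2 B2 n) (rcons (squeue st1) (newE n))
                  (rcons (squeue st2) (newE n)).
      apply: pw_rcons hq _; split; first by split=> //; split.
      by split=> /= h; exfalso; apply: ni.
    have HP : forall a b, CR ov1 sg1 B1 ov2 sg2 B2 n a b ->
        (eid a = i -> f1 a = pt B1 s /\ f2 b = pt B2 s) /\ (eid a <> i -> f1 a = f2 b).
      move=> a b [[eab [_ hn]] [h1 h2]]; split=> [ai|an].
      * have bi : eid b = i by rewrite -eab.
        have [_ [[d1 e1]|[_ [EG _]]]] := h1 ai; last by rewrite E in EG.
        have [_ [[d2 e2]|[_ [EG _]]]] := h2 bi; last by rewrite E in EG.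
        by rewrite /f1 /f2 (point_passive _ _ _ e1) (point_passive _ _ _ e2).
      * by rewrite -(hn an) /f1 /f2 (point_nonI _ _ o1 o2 hs an).
    have := min2 init (pt_mono s B12) hq' HP.
    set E1 := foldr _ init (map f1 _). set E2 := foldr _ init (map f2 _).
    move=> hmin.
    have lb1 : lep (s, false) E1.
      by apply: foldr_lb; [exact: init_ge|move=> a _; exact: point_ge].
    case: (boolP (ltp E1 (pt B1 s))) => hlt.
    * have eqE : E1 = E2 by case: hmin => // [[h _]]; rewrite h ltpxx in hlt.
      have [sB1 E1B1] := pt_ltp_inv lb1 hlt.
      left; split=> //; split=> //.
      apply: pw_map (pw_filter _ hq'); last first.
        move=> a b Cab; have [Hi Hn] := HP _ _ Cab.
        have [eab _] := Cab.1.
        case: (eqVneq (eid a) i) => [ai|an].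
        - have [-> ->] := Hi ai; rewrite hlt -eqE.
          by rewrite (ltp_lep_trans hlt (pt_mono s B12)).
        - by rewrite (Hn (neq_ne an)) eqE.
      rewrite -eqE => a b [[eab [hr hn]] [h1 h2]]; split; [split|split].
      -- by [].
      -- split=> /= [ai|an]; first by rewrite hr.
         by rewrite (hn an).
      -- move=> /= ai; have [ra [[d e1]|[_ [EG _]]]] := h1 ai; last by rewrite E in EG.
         split; first by rewrite ge_max ra E1B1.
         by left; exists d; rewrite eff_updS.
      -- move=> /= bi; have [rb [[d e2]|[_ [EG _]]]] := h2 bi; last by rewrite E in EG.
         split; first by rewrite ge_max rb (le_trans E1B1 B12).
         by left; exists d; rewrite eff_updS.
    * right; right; split; last (split=> //; split=> //).
      -- move=> e /In_map [a [ha ->]] /= ai.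
         have [ha1 ha2] := In_filter ha.
         have [b [_ Cab]] := pw_in1 hq' ha1.
         have [fa _] := (HP _ _ Cab).1 ai.
         by rewrite fa (negbTE hlt) in ha2.
      -- move=> e /In_map [b [hb ->]] /= bi.
         have [hb1 hb2] := In_filter hb.
         have [a [_ Cab]] := pw_in2 hq' hb1.
         have ai : eid a = i by rewrite Cab.1.1.
         have [_ fb] := (HP _ _ Cab).1 ai.
         rewrite fb in hb2.
         have lP : lep (pt B1 s) E2.
           by case: hmin => [<-|[_ h]].
         split; last exact: pt_lt (lep_ltp_trans lP hb2).
         rewrite le_max; apply/orP; right.
         exact: le_trans (pt_fst B1 s) (lep_fst lP).
  +
    have p2 : (0 < sinv st2)%N by rewrite -hv.
    rewrite (stp_inv _ _ E p) (stp_inv _ _ E p2) -hv (hs _ ni).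
    case: ifP => _; left; (split; last by []); split=> //=; apply: pw_impl hq; exact: shift.
Qed.

Lemma absent_step sg ov st n : n <> i -> absent st ->
  absent (stp sg ov st n).1 /\ i \notin ids (stp sg ov st n).2.
Proof.
move=> ni ab; case E: (ev n) => [|w].
- case Q: (squeue st) => [|a [|a' q]].
  + by rewrite (stp_good0 _ _ E Q); split=> // ? [].
  + rewrite (stp_good1 _ _ E Q) /= inE; split=> [? []|].
    apply/eqP => h; apply: (ab a); by [rewrite Q; left|].
  + rewrite (stp_good2 _ _ E Q); split; last rewrite /ids /= inE.
    * move=> e /In_map [x [hx ->]]; rewrite eid_updL.
      have [hx1 _] := In_filter hx; apply: ab; by rewrite Q.
    * apply/eqP => h; apply: (ab (winner sg ov n a (a' :: q))); last by [].
      rewrite Q; apply: In_foldl => w e; by case: ifP; auto.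
- case: (posnP (sinv st)) => [z|p].
  + rewrite (stp_surv _ _ E z) /=; split=> // e /In_map [x [hx ->]] /=.
    have [/In_rcons [hx1|->] _] := In_filter hx; first exact: ab.
    by [].
  + rewrite (stp_inv _ _ E p); case: ifP => _ //=.
    by rewrite inE; split=> //; apply/eqP => h; apply: ni.
Qed.

Lemma absent_iter sg ov st k m : (i < k)%N -> absent st ->
  absent (iter sg ov st k m) /\ i \notin ids (res sg ov st k m).
Proof.
move=> ik ab; elim: m => [|m [IH1 IH2]].
- split=> //; rewrite /res /= addn0.
  have ne : k <> i by move=> h; move: ik; rewrite h ltnn.
  by have [] := absent_step sg ov ne ab.
- have ne : (k + m.+1)%N <> i by move=> h; move: ik; rewrite -h ltnNge leq_addr.
  have ne' : (k + m)%N <> i by move=> h; move: ik; rewrite -h ltnNge leq_addr.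
  have [h1 _] := absent_step sg ov ne' IH1.
  split; first exact: h1.
  have [_ h2] := absent_step sg ov ne h1; exact: h2.
Qed.

Section Couple.
Variables (sg1 sg2 : nat -> strategy) (ov1 ov2 : option (nat * R)) (B1 B2 : R).
Variables (k : nat) (st1 st2 : state).
Hypotheses (o1 : ovok ov1) (o2 : ovok ov2) (hs : forall j, j <> i -> sg1 j = sg2 j)
  (ik : (i < k)%N) (B12 : B1 <= B2) (C0 : Cpl ov1 sg1 B1 ov2 sg2 B2 k st1 st2).

Local Notation it1 := (iter sg1 ov1 st1 k).
Local Notation it2 := (iter sg2 ov2 st2 k).
Local Notation rs1 := (res sg1 ov1 st1 k).
Local Notation rs2 := (res sg2 ov2 st2 k).

Lemma kmi m : (k + m)%N <> i.
Proof. by move=> h; move: ik; rewrite -h ltnNge leq_addr. Qed.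

Lemma couple m : (forall m', (m' < m)%N -> i \notin ids (rs2 m')) ->
  (Cpl ov1 sg1 B1 ov2 sg2 B2 (k + m) (it1 m) (it2 m) /\
   forall m', (m' < m)%N -> i \notin ids (rs1 m'))
  \/ (exists m0, (m0 < m)%N /\ absent (it1 m0.+1) /\
      (forall m', (m' <= m0)%N -> i \notin ids (rs1 m')) /\
      (forall e, List.In e (squeue (it2 m0.+1)) -> eid e = i -> B1 <= eres e /\ B1 < B2)).
Proof.
elim: m => [|m IH] h.
- by left; rewrite addn0; split.
- have h' : forall m', (m' < m)%N -> i \notin ids (rs2 m').
    by move=> m' lt; apply: h; apply: ltnW.
  case: (IH h') => [[Cm nw]|[m0 [lt rest]]]; last first.
    by right; exists m0; split=> //; apply: ltnW.
  have := sim_step o1 o2 hs (kmi (m:=m)) B12 Cm.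
  case=> [[Cn ide]|[[w2 _]|[abs [r1 [_ hB]]]]].
  + left; split; first by rewrite addnS.
    move=> m'; rewrite ltnS leq_eqVlt => /orP[/eqP ->|]; last exact: nw.
    by rewrite /res ide; apply: h.
  + by move: (h m (ltnSn m)); rewrite /res w2.
  + right; exists m; split=> //; split=> //; split=> //.
    move=> m'; rewrite leq_eqVlt => /orP[/eqP ->|]; last exact: nw.
    by rewrite /res r1.
Qed.

Lemma absent_after m0 m : absent (it1 m0.+1) -> (m0 < m)%N -> i \notin ids (rs1 m).
Proof.
move=> ab lt; rewrite -(subnKC lt) res_add.
have ik' : (i < k + m0.+1)%N by apply: leq_trans ik (leq_addr _ _).
by have [] := absent_iter sg1 ov1 (m - m0.+1) ik' ab.
Qed.

Lemma couple_win m1 : i \in ids (rs1 m1) -> exists m2, (m2 <= m1)%N /\ i \in ids (rs2 m2).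
Proof.
move=> w1; apply/not_existsP => nw.
have h : forall m', (m' < m1)%N -> i \notin ids (rs2 m').
  move=> m' lt; apply/negP => w; apply: (nw m'); split=> //; exact: ltnW.
case: (couple h) => [[Cm _]|[m0 [lt [ab _]]]].
- have := sim_step o1 o2 hs (kmi (m:=m1)) B12 Cm.
  case=> [[_ ide]|[[w2 _]|[_ [r1 _]]]].
  + by apply: (nw m1); split=> //; rewrite /res -ide.
  + by apply: (nw m1).
  + by move: w1; rewrite /res r1.
- by have := absent_after ab lt; rewrite w1.
Qed.

Lemma couple_first m1 : i \in ids (rs1 m1) ->
  exists m2, (m2 <= m1)%N /\ i \in ids (rs2 m2) /\
    (forall m', (m' < m2)%N -> i \notin ids (rs2 m')) /\
    Cpl ov1 sg1 B1 ov2 sg2 B2 (k + m2) (it1 m2) (it2 m2) /\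
    (forall m', (m' < m2)%N -> i \notin ids (rs1 m')).
Proof.
move=> w1; have ex : exists m, i \in ids (rs2 m).
  by have [m [_ h]] := couple_win w1; exists m.
case: (ex_minnP ex) => m2 w2 mn.
have [m [le wm]] := couple_win w1.
have m2le : (m2 <= m1)%N := leq_trans (mn _ wm) le.
have h : forall m', (m' < m2)%N -> i \notin ids (rs2 m').
  by move=> m' lt; apply/negP => w; have := mn _ w; rewrite leqNgt lt.
exists m2; split=> //; split=> //; split=> //.
case: (couple h) => [//|[m0 [lt [ab _]]]].
by have := absent_after ab (leq_trans lt m2le); rewrite w1.
Qed.

End Couple.

Lemma step_in sg ov st n e' : List.In e' (squeue (stp sg ov st n).1) ->
  exists e, (List.In e (squeue st) \/ e = newE n) /\ eid e = eid e' /\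
   ((e' = e /\ List.In e (squeue st))
    \/ (exists w s p, ev n = Buyer w /\ e' = updS n s p e /\
          (forall b d, eff_stat ov e = Passive b d -> p <= b))
    \/ (ev n = Good R /\ List.In e (squeue st) /\ e' = updL sg ov n e)).
Proof.
case E: (ev n) => [|w].
- case Q: (squeue st) => [|a [|a' q]].
  + by rewrite (stp_good0 _ _ E Q).
  + by rewrite (stp_good1 _ _ E Q).
  + rewrite (stp_good2 _ _ E Q) => /In_map [x [hx ->]].
    have [hx1 _] := In_filter hx.
    exists x; split; first by left.
    split; first by rewrite eid_updL.
    by right; right; split=> //; split=> //.
- case: (posnP (sinv st)) => [z|p].
  + rewrite (stp_surv _ _ E z) /= => /In_map [x [hx ->]].
    have [hx1 hx2] := In_filter hx.
    exists x; split; first by case: (In_rcons hx1); auto.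
    split=> //; right; left; do 3 eexists; split; first by [].
    split; first by [].
    move=> b d hb; rewrite (point_passive _ _ _ hb) in hx2.
    have lb : lep (vh (size (squeue st))%:Z, false)
      (foldr (@minp R) (Num.max (vh (size (squeue st))%:Z) (vh (size (squeue st)).+1%:Z), false)
        (map (point sg ov n (vh (size (squeue st))%:Z)) (rcons (squeue st) (newE n)))).
      by apply: foldr_lb; [exact: init_ge|move=> a _; exact: point_ge].
    by have [] := pt_ltp_inv lb hx2.
  + rewrite (stp_inv _ _ E p); case: ifP => _ /= h; exists e'; split; auto.
Qed.

Definition cnt (q : seq entry) := count (fun e => eid e == i) q.

Lemma cnt_filter (f : pred entry) q : (cnt [seq e <- q | f e] <= cnt q)%N.
Proof.
elim: q => [|a q IH] //=; case: ifP => _ /=; first by rewrite leq_add2l.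
exact: leq_trans IH (leq_addl _ _).
Qed.

Lemma cnt_map (g : entry -> entry) q : (forall e, eid (g e) = eid e) -> cnt (map g q) = cnt q.
Proof. by move=> h; elim: q => [|a q IH] //=; rewrite IH h. Qed.

Lemma cnt_rcons q a : cnt (rcons q a) = (cnt q + (eid a == i))%N.
Proof. by rewrite /cnt -cats1 count_cat /= addn0. Qed.

Lemma cnt_step sg ov st n : (cnt (squeue (stp sg ov st n).1) <= cnt (squeue st) + (n == i))%N.
Proof.
case E: (ev n) => [|w].
- case Q: (squeue st) => [|a [|a' q]].
  + by rewrite (stp_good0 _ _ E Q).
  + by rewrite (stp_good1 _ _ E Q).
  + rewrite (stp_good2 _ _ E Q) [X in (X <= _)%N]cnt_map; last exact: eid_updL.
    exact: leq_trans (cnt_filter _ _) (leq_addr _ _).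
- case: (posnP (sinv st)) => [z|p].
  + rewrite (stp_surv _ _ E z) /= cnt_map //.
    apply: leq_trans (cnt_filter _ _) _; by rewrite cnt_rcons.
  + by rewrite (stp_inv _ _ E p); case: ifP => _ /=; rewrite leq_addr.
Qed.

Lemma cnt_absent st : absent st -> cnt (squeue st) = 0%N.
Proof.
rewrite /absent; case: st => v q /=; elim: q => [|a q IH] //= h.
rewrite IH; last by move=> e he; apply: h; right.
by case: eqP => // /(h a (or_introl erefl)).
Qed.

Lemma cnt_uniq q a b : (cnt q <= 1)%N -> List.In a q -> List.In b q ->
  eid a = i -> eid b = i -> a = b.
Proof.
have pos : forall c q, List.In c q -> eid c = i -> (0 < cnt q)%N.
  move=> c; elim=> [|x q' IH] //= [<- ->|h ci]; first by rewrite eqxx.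
  by rewrite (leq_trans (IH h ci)) ?leq_addl.
elim: q => [|x q IH] //= c1 [ax|aq] [bx|bq] ai bi.
- by rewrite -ax -bx.
- subst x; have := pos _ _ bq bi; move: c1; rewrite ai eqxx.
  by case: (cnt q).
- subst x; have := pos _ _ aq ai; move: c1; rewrite bi eqxx.
  by case: (cnt q).
- apply: IH => //; exact: leq_trans (leq_addl _ _) c1.
Qed.

Lemma run_absent sg n : (n <= i)%N -> absent (run' sg n).
Proof.
elim: n => [|n IH] h; first by move=> e [].
have ni : n <> i by move=> e; move: h; rewrite e ltnn.
by have [] := absent_step sg None ni (IH (ltnW h)).
Qed.

Lemma run_cnt sg n : (cnt (squeue (run' sg n)) <= 1)%N.
Proof.
elim: n => [|n IH] //.
have h := cnt_step sg None (run' sg n) n.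
apply: leq_trans h _.
case: (eqVneq n i) => [ni|ni]; last by rewrite addn0.
by rewrite cnt_absent //; apply: run_absent; rewrite ni.
Qed.

Definition passinv (st : state) := forall e, List.In e (squeue st) -> eid e = i ->
  forall b d, estat e = Passive b d -> eres e <= b.

Lemma passinv_step sg st n : passinv st -> passinv (stp sg None st n).1.
Proof.
move=> h e' /step_in [e [he [ee [[-> hq]|[[w [s [p [_ [-> hp]]]]]|[_ [hq ->]]]]]]] ei.
- exact: (h _ hq ei).
- move=> b d /= hs; case: he => [hq|ne]; last by move: hs; rewrite ne.
  by rewrite ge_max (h _ hq ei b d hs) /=; exact: hp b d hs.
- rewrite eid_updL in ei; rewrite /updL; case hs: (estat e) => [|b' d'] b d /=.
  + by move=> [<- _]; rewrite /bidof /eff_stat hs le_max lexx.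
  + by rewrite hs => -[<- _]; exact: (h _ hq ei _ _ hs).
Qed.

Lemma run_passinv sg n : passinv (run' sg n).
Proof. elim: n => [|n IH]; first by move=> e []. exact: passinv_step. Qed.

Definition depinv (st : state) := forall e, List.In e (squeue st) -> eid e = i ->
  forall b d, estat e = Passive b d -> d = None.

Lemma depinv_step sg st n : (forall h, leave (sg i) h = None) -> depinv st ->
  depinv (stp sg None st n).1.
Proof.
move=> hl h e' /step_in [e [he [ee [[-> hq]|[[w [s [p [_ [-> hp]]]]]|[_ [hq ->]]]]]]] ei.
- exact: (h _ hq ei).
- move=> b d /= hs; case: he => [hq|ne]; last by move: hs; rewrite ne.
  exact: (h _ hq ei _ _ hs).
- rewrite eid_updL in ei; rewrite /updL; case hs: (estat e) => [|b' d'] b d /=.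
  + by move=> [_ <-]; rewrite ei hl.
  + by rewrite hs => -[_ <-]; exact: (h _ hq ei _ _ hs).
Qed.

Lemma run_depinv sg n : (forall h, leave (sg i) h = None) -> depinv (run' sg n).
Proof. move=> hl; elim: n => [|n IH]; first by move=> e []. exact: depinv_step. Qed.

Definition monoinv (x : R) (st : state) := forall e, List.In e (squeue st) -> eid e = i -> x <= eres e.

Lemma monoinv_step x sg ov st n : n <> i -> monoinv x st -> monoinv x (stp sg ov st n).1.
Proof.
move=> ni h e' /step_in [e [he [ee [[-> hq]|[[w [s [p [_ [-> hp]]]]]|[_ [hq ->]]]]]]] ei.
- exact: (h _ hq ei).
- case: he => [hq|ne]; last by move: ei; rewrite ne => /= /ni.
  by rewrite /= le_max (h _ hq ei).
- by rewrite eid_updL in ei; rewrite eres_updL (h _ hq ei).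
Qed.

Lemma monoinv_iter x sg ov st k m : (i < k)%N -> monoinv x st -> monoinv x (iter sg ov st k m).
Proof.
move=> ik h; elim: m => [|m IH] //=; apply: monoinv_step => // e.
by move: ik; rewrite -e ltnNge leq_addr.
Qed.

Definition val sg (v : R) n (x : result R) : R :=
  match x with
  | RBuy p => v - p
  | RGood p pres => if pres then v - p else 0
  | RWin r pres => if pres then v - cutoff vh L ev tm tb sg n i r else 0
  end.

Definition outc sg n := outcome vh L ev tm tb sg n i.

Lemma payoff_none sg v : (forall n, outc sg n = None) -> payoff vh L ev tm tb sg i v = 0.
Proof.
move=> H; rewrite /payoff; case: pselect => // h; exfalso.
by case: h => n; rewrite /outc in H; rewrite H.
Qed.

Lemma payoff_at sg v n x : (forall m, (m < n)%N -> outc sg m = None) -> outc sg n = Some x ->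
  payoff vh L ev tm tb sg i v = val sg v n x.
Proof.
move=> Hb Hx; rewrite /payoff; case: pselect => [h|h]; last first.
  by exfalso; apply: h; exists n; rewrite /outc in Hx; rewrite Hx.
case: ex_minnP => m hm hmin.
have mn : (m <= n)%N by apply: hmin; rewrite /outc in Hx; rewrite Hx.
have em : m = n.
  apply/eqP; rewrite eqn_leq mn /=; rewrite leqNgt; apply/negP => lt.
  by move: hm; rewrite /outc in Hb; rewrite Hb.
by subst m; rewrite /outc in Hx; rewrite Hx.
Qed.

Lemma filter_fst_nil (l : seq (nat * result R)) : i \notin ids l ->
  [seq x <- l | x.1 == i] = [::].
Proof.
elim: l => [|[a b] l IH] //=; rewrite inE negb_or => /andP[ne /IH ->].
by rewrite eq_sym (negbTE ne).
Qed.

Lemma outc_none sg n : i \notin ids (stp sg None (run' sg n) n).2 -> outc sg n = None.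
Proof. by move=> h; rewrite /outc outcomeE filter_fst_nil. Qed.

Lemma outc_some sg n x : (stp sg None (run' sg n) n).2 = [:: (i, x)] -> outc sg n = Some x.
Proof. by move=> h; rewrite /outc outcomeE h /= eqxx. Qed.

Lemma outc_in sg n : outc sg n <> None -> i \in ids (stp sg None (run' sg n) n).2.
Proof. by move=> h; apply/negP => /negP /outc_none. Qed.

Lemma res_i sg ov st n : n <> i -> i \in ids (stp sg ov st n).2 ->
  ev n = Good R /\
  ((exists e, squeue st = [:: e] /\ eid e = i /\
       (stp sg ov st n).2 = [:: (i, RGood (eres e) (present ov e (tm n)))])
   \/ (exists e0 e1 q, squeue st = e0 :: e1 :: q /\
        eid (winner sg ov n e0 (e1 :: q)) = i /\
        List.In (winner sg ov n e0 (e1 :: q)) (squeue st) /\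
        (stp sg ov st n).2 = [:: (i, RWin (eres (winner sg ov n e0 (e1 :: q)))
              (present ov (winner sg ov n e0 (e1 :: q)) (tm n)))])).
Proof.
move=> ni; case E: (ev n) => [|w].
- move=> hi; split=> //; move: hi; case Q: (squeue st) => [|a [|a' q]].
  + by rewrite (stp_good0 _ _ E Q).
  + rewrite (stp_good1 _ _ E Q) /= inE => /eqP ai.
    by left; exists a; rewrite -ai.
  + rewrite (stp_good2 _ _ E Q) => hin.
    have wi : eid (winner sg ov n a (a' :: q)) = i.
      by move: hin; rewrite /ids map_cons mem_seq1 => /eqP ->.
    right; exists a, a', q; split=> //; split=> //.
    split; last by rewrite wi.
    by rewrite /winner; apply: In_foldl => x y; case: ifP; auto.
- case: (posnP (sinv st)) => [z|p].
  + by rewrite (stp_surv _ _ E z).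
  + rewrite (stp_inv _ _ E p); case: ifP => _ //=.
    by rewrite inE => /eqP e; exfalso; apply: ni.
Qed.

Lemma erel_refl a : erel a a.
Proof. by split=> //; split. Qed.

Lemma mkCpl ov1 sg1 B1 ov2 sg2 B2 n (st1 st2 : state) :
  sinv st1 = sinv st2 -> pw erel (squeue st1) (squeue st2) ->
  (forall a, List.In a (squeue st1) -> IP ov1 sg1 n B1 a) ->
  (forall b, List.In b (squeue st2) -> IP ov2 sg2 n B2 b) ->
  Cpl ov1 sg1 B1 ov2 sg2 B2 n st1 st2.
Proof.
move=> hv hq h1 h2; split=> //; apply: pw_and hq _ => a b ha hb r.
by split=> //; split; [exact: h1|exact: h2].
Qed.

Lemma IP_Some sg n B e : (eid e = i -> eres e <= B) -> IP (Some (i, B)) sg n B e.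
Proof. by move=> h ei; split; [exact: h ei|left; exists None; exact: eff_I]. Qed.

Lemma Cpl_erel ov1 sg1 B1 ov2 sg2 B2 n st1 st2 :
  Cpl ov1 sg1 B1 ov2 sg2 B2 n st1 st2 -> pw erel (squeue st1) (squeue st2).
Proof. by case=> _ h; apply: pw_impl h => a b []. Qed.

Lemma Cpl_IP1 ov1 sg1 B1 ov2 sg2 B2 n st1 st2 a :
  Cpl ov1 sg1 B1 ov2 sg2 B2 n st1 st2 -> List.In a (squeue st1) -> IP ov1 sg1 n B1 a.
Proof. by case=> _ h /(pw_in1 h) [b [_ [_ []]]]. Qed.

Lemma Cpl_IP2 ov1 sg1 B1 ov2 sg2 B2 n st1 st2 b :
  Cpl ov1 sg1 B1 ov2 sg2 B2 n st1 st2 -> List.In b (squeue st2) -> IP ov2 sg2 n B2 b.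
Proof. by case=> _ h /(pw_in2 h) [a [_ [_ []]]]. Qed.

Lemma Cpl_eres2 ov1 sg1 B1 ov2 sg2 B2 n st1 st2 b :
  Cpl ov1 sg1 B1 ov2 sg2 B2 n st1 st2 -> List.In b (squeue st2) -> eid b = i -> eres b <= B1.
Proof.
case=> _ h /(pw_in2 h) [a [_ [[eab [hr _]] [h1 _]]]] bi.
have ai : eid a = i by rewrite eab.
by rewrite -(hr ai); case: (h1 ai).
Qed.

Lemma pw_erel_sym q1 q2 : pw erel q1 q2 -> pw erel q2 q1.
Proof.
apply: pw_sym => a b [eab [hr hn]]; split=> //; split=> [bi|bn].
- by rewrite hr // eab.
- by rewrite hn // eab.
Qed.

Lemma win_to_proxy sg1 sg2 ov1 k (st1 st2 : state) B1 B2 :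
  ovok ov1 -> (forall j, j <> i -> sg1 j = sg2 j) -> (i < k)%N -> B1 <= B2 ->
  sinv st1 = sinv st2 -> pw erel (squeue st1) (squeue st2) ->
  (forall a, List.In a (squeue st1) -> IP ov1 sg1 k B1 a) ->
  (exists m, i \in ids (res sg1 ov1 st1 k m)) ->
  exists m, i \in ids (res sg2 (Some (i, B2)) st2 k m).
Proof.
move=> o1 hs ik B12 hv hq h1 [m hm].
have C : Cpl ov1 sg1 B1 (Some (i, B2)) sg2 B2 k st1 st2.
  apply: mkCpl => // b hb; apply: IP_Some => bi.
  have [a [ha [eab [hr _]]]] := pw_in2 hq hb.
  have ai : eid a = i by rewrite eab.
  rewrite -(hr ai); case: (h1 _ ha ai) => le _; exact: le_trans le B12.
have [m2 [_ w]] := couple_win o1 (@ovok_Some B2) hs ik B12 C hm.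
by exists m2.
Qed.

Lemma win_proxy sg1 sg2 k (st1 st2 : state) B1 B2 :
  (forall j, j <> i -> sg1 j = sg2 j) -> (i < k)%N -> B1 <= B2 ->
  sinv st1 = sinv st2 -> pw erel (squeue st1) (squeue st2) ->
  (forall a, List.In a (squeue st1) -> eid a = i -> eres a <= B1) ->
  (exists m, i \in ids (res sg1 (Some (i, B1)) st1 k m)) ->
  exists m, i \in ids (res sg2 (Some (i, B2)) st2 k m).
Proof.
move=> hs ik B12 hv hq h1; apply: win_to_proxy (@ovok_Some B1) hs ik B12 hv hq _.
by move=> a ha; apply: IP_Some; exact: h1.
Qed.

Lemma pw_erel_refl q : pw erel q q.
Proof. by apply: pw_refl => a _; exact: erel_refl. Qed.

Lemma wins_from sg ov st k m1 m : (m1 <= m)%N -> i \in ids (res sg ov st k m) ->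
  exists m', i \in ids (res sg ov (iter sg ov st k m1) (k + m1) m').
Proof. by move=> le h; exists (m - m1)%N; rewrite -res_add subnKC. Qed.

Lemma cutoff_le sg n r B : r <= B -> wins_cf vh L ev tm tb sg n i B ->
  cutoff vh L ev tm tb sg n i r <= B.
Proof.
move=> rB w; rewrite /cutoff.
have hlb : has_lbound [set B' | r <= B' /\ wins_cf vh L ev tm tb sg n i B'].
  by exists r => y [].
exact: (ge_inf hlb) (conj rB w).
Qed.

Lemma cutoff_ge sg n r : (exists B, r <= B /\ wins_cf vh L ev tm tb sg n i B) ->
  r <= cutoff vh L ev tm tb sg n i r.
Proof.
move=> [B hB]; rewrite /cutoff; apply: lb_le_inf; first by exists B.
by move=> y [].
Qed.

Lemma res_run sg k m : res sg None (run' sg k) k m = (stp sg None (run' sg (k + m)) (k + m)).2.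
Proof. by rewrite /res -run_add. Qed.

Lemma iter_run sg k m : iter sg None (run' sg k) k m = run' sg (k + m).
Proof. by rewrite -run_add. Qed.

Lemma present_dep sg n e t : (forall h, leave (sg i) h = None) ->
  List.In e (squeue (run' sg n)) -> eid e = i -> present None e t = true.
Proof.
move=> hl he ei; rewrite /present /eff_stat; case E: (estat e) => [|b d] //.
by rewrite (run_depinv hl he ei E).
Qed.

Lemma noout_split sg a m2 : (forall m, (m < a)%N -> outc sg m = None) ->
  (forall m', (m' < m2)%N -> i \notin ids (res sg None (run' sg a) a m')) ->
  forall n, (n < a + m2)%N -> outc sg n = None.
Proof.
move=> hb hr n lt; case: (ltnP n a) => [na|an]; first exact: hb.
rewrite -(subnKC an); apply: outc_none; rewrite -res_run; apply: hr.
by rewrite ltn_subLR.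
Qed.

Section Strat.
Variables (sig : nat -> strategy) (v : R) (s : strategy).

Local Notation St := (upd_strat sig i (truthful v)).
Local Notation Ss := (upd_strat sig i s).

Lemma hsTS j : j <> i -> St j = Ss j.
Proof. by rewrite /upd_strat => /eqP /negbTE ->. Qed.

Lemma St_i : St i = truthful v. Proof. by rewrite /upd_strat eqxx. Qed.
Lemma Ss_i : Ss i = s. Proof. by rewrite /upd_strat eqxx. Qed.

Lemma leaveT h : leave (St i) h = None. Proof. by rewrite St_i. Qed.

Lemma hsame (sg : nat -> strategy) j : j <> i -> sg j = sg j. Proof. by []. Qed.

Section LB.
Variables (a : nat) (r : R).
Hypotheses (ia : (i < a)%N) (rv : r <= v)
  (HIP : forall e, List.In e (squeue (run' St a)) -> IP None St a v e)
  (Hr : forall e, List.In e (squeue (run' St a)) -> eid e = i -> eres e <= r)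
  (Hb : forall m, (m < a)%N -> outc St m = None).

Lemma LB_le B : r <= B -> B <= v -> wins_cf vh L ev tm tb St a i B ->
  v - B <= payoff vh L ev tm tb St i v.
Proof.
move=> rB Bv /wins_cfE [m1 hm1].
have C : Cpl (Some (i, B)) St B None St v a (run' St a) (run' St a).
  apply: mkCpl => //; first exact: pw_erel_refl.
  by move=> e he; apply: IP_Some => ei; exact: le_trans (Hr he ei) rB.
have [m2 [le2 [w2 [nb2 [C2 nb1]]]]] :=
  couple_first (@ovok_Some B) ovok_None (@hsame St) ia Bv C hm1.
rewrite iter_run in C2.
have nb := noout_split Hb nb2.
have ni : (a + m2)%N <> i by move=> h; move: ia; rewrite -h ltnNge leq_addr.
rewrite res_run in w2.
case: (res_i ni w2) => EG [[e [Q [ei Hres]]]|[e0 [e1 [q [Q [wi [win Hres]]]]]]].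
- rewrite (payoff_at v nb (outc_some Hres)) /=.
  have eq : List.In e (squeue (run' St (a + m2))) by rewrite Q; left.
  rewrite (present_dep _ leaveT eq ei).
  have := Cpl_eres2 C2 eq ei; lra.
- rewrite (payoff_at v nb (outc_some Hres)) /=.
  set w := winner _ _ _ _ _ in wi win Hres *.
  rewrite (present_dep _ leaveT win wi).
  have rw : eres w <= B := Cpl_eres2 C2 win wi.
  suff : cutoff vh L ev tm tb St (a + m2) i (eres w) <= B by lra.
  apply: cutoff_le rw _; apply/wins_cfE.
  have ia2 : (i < a + m2)%N by apply: leq_trans ia (leq_addr _ _).
  apply: win_proxy (@hsame St) ia2 (lexx B) _ (Cpl_erel C2) _ _.
  + by case: C2.
  + by move=> x hx xi; have [] := Cpl_IP1 C2 hx xi.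
  + exact: wins_from le2 hm1.
Qed.

Lemma T_nowin : ~ wins_cf vh L ev tm tb St a i v -> payoff vh L ev tm tb St i v = 0.
Proof.
move=> nw; apply: payoff_none => n.
case: (ltnP n a) => [na|an]; first exact: Hb.
case E: (outc St n) => [x|] //; exfalso; apply: nw.
have : outc St n <> None by rewrite E.
move/outc_in; rewrite -(subnKC an) -res_run => hm.
apply/wins_cfE.
apply: win_to_proxy ovok_None (@hsame St) ia (lexx v) erefl (pw_erel_refl _) HIP _.
by exists (n - a)%N.
Qed.

Lemma T_ge0 : 0 <= payoff vh L ev tm tb St i v.
Proof.
case: (pselect (wins_cf vh L ev tm tb St a i v)) => w.
- by have := LB_le rv (lexx v) w; rewrite subrr.
- by rewrite T_nowin.
Qed.

Lemma LB B : r <= B -> wins_cf vh L ev tm tb St a i B -> v - B <= payoff vh L ev tm tb St i v.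
Proof.
move=> rB w; case: (lerP B v) => Bv; first exact: LB_le.
have := T_ge0; lra.
Qed.

End LB.

Lemma outc_none_inv sg n : outc sg n = None -> i \notin ids (stp sg None (run' sg n) n).2.
Proof.
rewrite /outc outcomeE => h; apply/negP => hi; move: h.
elim: (stp sg None (run' sg n) n).2 hi => [|[x y] l IH] //=.
rewrite inE eq_sym; case: (eqVneq x i) => [->|ne] /=; first by [].
by move=> /IH.
Qed.

Lemma dens (x y v' : R) : (forall B, x < B -> v' - B <= y) -> v' - x <= y.
Proof.
move=> h; apply/ler_addgt0Pr => e e0.
have := h (x + e); rewrite ltrDl => /(_ e0); lra.
Qed.

Lemma uniq_i sg n a b : List.In a (squeue (run' sg n)) -> List.In b (squeue (run' sg n)) ->
  eid a = i -> eid b = i -> a = b.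
Proof. exact: cnt_uniq (run_cnt sg n). Qed.

Lemma win_nonempty sg n w : (i < n)%N -> List.In w (squeue (run' sg n)) -> eid w = i ->
  ev n = Good R ->
  i \in ids (stp sg None (run' sg n) n).2 ->
  exists B, eres w <= B /\ wins_cf vh L ev tm tb sg n i B.
Proof.
move=> ik win wi EG hw.
exists (bidof sg None n w).
have hIP : forall e, List.In e (squeue (run' sg n)) -> IP None sg n (bidof sg None n w) e.
  move=> e he ei; have <- := uniq_i win he wi ei.
  rewrite /bidof /eff_stat; case E: (estat w) => [|b d].
  - split; first by rewrite le_max lexx.
    by right; split=> //; split=> //; rewrite wi.
  - split; first exact: (run_passinv win wi E).
    by left; exists d.
split; first by case: (hIP _ win wi).
apply/wins_cfE.
apply: win_to_proxy ovok_None (@hsame sg) ik (lexx _) erefl (pw_erel_refl _) hIP _.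
by exists 0%N; rewrite /res addn0.
Qed.

Section UB.
Variables (a : nat) (r : R) (estar : entry).
Hypotheses (ia : (i < a)%N) (rv : r <= v) (Ea : ev a = Good R)
  (Seq : run' Ss a = run' St a)
  (Hin : List.In estar (squeue (run' St a))) (Hei : eid estar = i)
  (HA : estat estar = Active R) (Hres : eres estar = r)
  (HbT : forall m, (m < a)%N -> outc St m = None)
  (HbS : forall m, (m < a)%N -> outc Ss m = None).

Let b := Num.max r (bid s (ehist estar) (tm a)).

Lemma huniq e : List.In e (squeue (run' St a)) -> eid e = i -> e = estar.
Proof. by move=> he ei; exact: uniq_i he Hin ei Hei. Qed.

Lemma Hr e : List.In e (squeue (run' St a)) -> eid e = i -> eres e <= r.
Proof. by move=> he ei; rewrite (huniq he ei) Hres. Qed.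

Lemma IPT e : List.In e (squeue (run' St a)) -> IP None St a v e.
Proof.
move=> he ei; rewrite (huniq he ei) Hres; split=> //; right.
rewrite /eff_stat HA; split=> //; split=> //.
by rewrite St_i /=; apply: max_r.
Qed.

Lemma IPD e : List.In e (squeue (run' Ss a)) -> IP None Ss a b e.
Proof.
rewrite Seq => he ei; rewrite (huniq he ei) Hres; split; first by rewrite le_max lexx.
right; rewrite /eff_stat HA; split=> //; split=> //.
by rewrite Ss_i.
Qed.

Lemma hsST j : j <> i -> Ss j = St j.
Proof. by move=> h; rewrite hsTS. Qed.

Lemma W_b : wins_cf vh L ev tm tb St a i b ->
  forall B, b <= B -> r <= B -> wins_cf vh L ev tm tb St a i B.
Proof.
move=> w B bB rB; move/wins_cfE: w => w; apply/wins_cfE.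
apply: win_proxy (@hsame St) ia bB erefl (pw_erel_refl _) _ w.
by move=> e he ei; apply: le_trans (Hr he ei) _; rewrite le_max lexx.
Qed.

Lemma UB : payoff vh L ev tm tb Ss i v <= payoff vh L ev tm tb St i v.
Proof.
have T0 := T_ge0 ia rv IPT Hr HbT.
have LBa := LB ia rv IPT Hr HbT.
case: (pselect (exists n, isSome (outc Ss n))) => [ex|nex]; last first.
  rewrite payoff_none // => n; case E: (outc Ss n) => [x|] //.
  by exfalso; apply: nex; exists n; rewrite E.
case: (ex_minnP ex) => n' hn' hmin.
have an' : (a <= n')%N.
  by rewrite leqNgt; apply/negP => lt; move: hn'; rewrite HbS.
set m' := (n' - a)%N.
have En' : n' = (a + m')%N by rewrite subnKC.
have nbS : forall m, (m < n')%N -> outc Ss m = None.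
  move=> m lt; case E: (outc Ss m) => [x|] //.
  by have := hmin m; rewrite E leqNgt lt => /(_ isT).
have ni : n' <> i by move=> h; move: ia; rewrite -h ltnNge an'.
have hw : i \in ids (stp Ss None (run' Ss n') n').2.
  by apply: outc_in; move: hn'; case: (outc Ss n').
have hD : i \in ids (res Ss None (run' Ss a) a m') by rewrite res_run -En'.
have nD : forall m, (m < m')%N -> i \notin ids (res Ss None (run' Ss a) a m).
  move=> m lt; rewrite res_run; apply: outc_none_inv; apply: nbS.
  by rewrite En' ltn_add2l.
have Wb : wins_cf vh L ev tm tb St a i b.
  apply/wins_cfE; rewrite -Seq.
  apply: win_to_proxy ovok_None hsST ia (lexx b) erefl (pw_erel_refl _) IPD _.
  by exists m'.
have ian' : (i < n')%N by apply: leq_trans ia an'.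
have mono : forall x m0, (m0 <= m')%N -> monoinv x (run' Ss (a + m0)) ->
    forall e, List.In e (squeue (run' Ss n')) -> eid e = i -> x <= eres e.
  move=> x m0 le h; rewrite En' -(subnKC le) addnA -iter_run.
  apply: monoinv_iter => //; exact: leq_trans ia (leq_addr _ _).
have rmono : forall e, List.In e (squeue (run' Ss n')) -> eid e = i -> r <= eres e.
  apply: (mono r 0%N) => //; rewrite addn0 Seq => e he ei.
  by rewrite (huniq he ei) Hres.
case: (res_i ni hw) => EG [[e [Q [ei Hx]]]|[e0 [e1 [q [Q [wi [win Hx]]]]]]].
-
  rewrite (payoff_at v nbS (outc_some Hx)) /=.
  case: (present None e (tm n')) => //.
  have ein : List.In e (squeue (run' Ss n')) by rewrite Q; left.
  apply: dens => B rB.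
  have r'B : r <= B := le_trans (rmono e ein ei) (ltW rB).
  case: (lerP b B) => bB; first exact: LBa r'B (W_b Wb bB r'B).
  refine (LBa B r'B _); apply/wins_cfE.
  have C : Cpl (Some (i, B)) St B None Ss b a (run' St a) (run' Ss a).
    rewrite Seq; apply: mkCpl => //; first exact: pw_erel_refl.
    + by move=> x hx; apply: IP_Some => xi; exact: le_trans (Hr hx xi) r'B.
    + by rewrite -Seq; exact: IPD.
  case: (couple (@ovok_Some B) ovok_None hsTS ia (ltW bB) C nD)
    => [[Cm _]|[m0 [lt [_ [_ hB]]]]].
  + exists m'; rewrite /res -En'.
    rewrite iter_run -En' in Cm.
    case: Cm => hv hq; move: hq; rewrite Q.
    case Qy: (squeue (iter St (Some (i, B)) (run' St a) a m')) => [|y [|y' qy]] //=.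
    * move=> [[[ey _] _] _]; rewrite (stp_good1 _ _ EG Qy) /= inE ey ei //.
    * by case=> _ [].
  + exfalso; rewrite iter_run in hB.
    have hm : monoinv B (run' Ss (a + m0.+1)) by move=> x hx xi; have [] := hB x hx xi.
    have h := mono B m0.+1 lt hm e ein ei.
    by have := lt_le_trans rB h; rewrite ltxx.
-
  set w := winner _ _ _ _ _ in wi win Hx *.
  rewrite (payoff_at v nbS (outc_some Hx)) /=.
  case: (present None w (tm n')) => //.
  set r' := eres w.
  have r'r : r <= r' := rmono w win wi.
  (* every bid above r' that wins from n' in the deviation world wins from a in the truthful world *)
  have key : forall C, r' < C -> wins_cf vh L ev tm tb Ss n' i C -> v - C <= payoff vh L ev tm tb St i v.
    move=> C r'C wC.
    have rC : r <= C := le_trans r'r (ltW r'C).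
    case: (lerP b C) => bC; first exact: LBa rC (W_b Wb bC rC).
    refine (LBa C rC _); apply/wins_cfE.
    have Cc : Cpl (Some (i, C)) St C None Ss b a (run' St a) (run' Ss a).
      rewrite Seq; apply: mkCpl => //; first exact: pw_erel_refl.
      + by move=> x hx; apply: IP_Some => xi; exact: le_trans (Hr hx xi) rC.
      + by rewrite -Seq; exact: IPD.
    case: (couple (@ovok_Some C) ovok_None hsTS ia (ltW bC) Cc nD)
      => [[Cm _]|[m0 [lt [_ [_ hB]]]]].
    + rewrite iter_run -En' in Cm.
      move/wins_cfE: wC => wC.
      have [m2 hm2] : exists m, i \in ids (res St (Some (i, C))
                         (iter St (Some (i, C)) (run' St a) a m') n' m).
        apply: win_proxy hsST ian' (lexx C) _ _ _ wC.
        * by case: Cm.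
        * exact: pw_erel_sym (Cpl_erel Cm).
        * by move=> x hx xi; exact: Cpl_eres2 Cm hx xi.
      by exists (m' + m2)%N; rewrite res_add -En'.
    + exfalso; rewrite iter_run in hB.
      have hm : monoinv C (run' Ss (a + m0.+1)) by move=> x hx xi; have [] := hB x hx xi.
      have h := mono C m0.+1 lt hm w win wi.
      by have := lt_le_trans r'C h; rewrite ltxx.
  have [B0 [rB0 wB0]] := win_nonempty ian' win wi EG hw.
  suff : v - payoff vh L ev tm tb St i v <= cutoff vh L ev tm tb Ss n' i r' by lra.
  rewrite /cutoff; apply: lb_le_inf; first by exists B0.
  move=> C [r'C wC]; suff : v - C <= payoff vh L ev tm tb St i v by lra.
  case: (ltrP r' C) => [lt|le]; first exact: key.
  have eC : C = r' by apply/eqP; rewrite eq_le le r'C.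
  subst C; apply: dens => C' lt; refine (key C' lt _).
  move/wins_cfE: wC => wC; apply/wins_cfE.
  apply: win_proxy (@hsame Ss) ian' (ltW lt) erefl (pw_erel_refl _) _ wC.
  by move=> x hx xi; rewrite (uniq_i hx win xi wi).
Qed.

End UB.

End Strat.

Lemma map_in (X : Type) (f g : entry -> X) l :
  (forall x, List.In x l -> f x = g x) -> map f l = map g l.
Proof.
elim: l => [|a l IH] //= h; rewrite h; last by left.
by rewrite IH // => x hx; apply: h; right.
Qed.

Lemma filter_in (p1 p2 : pred entry) l :
  (forall x, List.In x l -> p1 x = p2 x) -> filter p1 l = filter p2 l.
Proof.
elim: l => [|a l IH] //= h; rewrite h; last by left.
by rewrite IH // => x hx; apply: h; right.
Qed.

Lemma foldl_in (f1 f2 : entry -> entry -> entry) x l :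
  (forall w e, f1 w e = w \/ f1 w e = e) ->
  (forall w e, List.In w (x :: l) -> List.In e l -> f1 w e = f2 w e) ->
  foldl f1 x l = foldl f2 x l.
Proof.
move=> hf; elim: l x => [|a l IH] x //= h.
rewrite -h; [|by left|by left].
apply: IH => w e hw he; apply: h; last by right.
case: hw => [<-|hw]; last by right; right.
by case: (hf x a) => ->; [left|right; left].
Qed.

Lemma In_rconsI (a b : entry) q : List.In a q -> List.In a (rcons q b).
Proof. by elim: q => [|x q IH] //= [->|h]; [left|right; apply: IH]. Qed.

Lemma In_rcons_last (b : entry) q : List.In b (rcons q b).
Proof. by elim: q => [|x q IH] /=; [left|right]. Qed.

Lemma In_filterI (a : entry) (f : pred entry) q : List.In a q -> f a -> List.In a [seq e <- q | f e].
Proof. elim: q => [|x q IH] //= [->|h] fa; first by rewrite fa; left.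
by case: ifP => _; [right|]; apply: IH.
Qed.

Lemma In_mapI (a : entry) (g : entry -> entry) q : List.In a q -> List.In (g a) (map g q).
Proof. by elim: q => [|x q IH] //= [->|h]; [left|right; apply: IH]. Qed.

Lemma step_congr sg1 sg2 ov st n :
  (forall e, List.In e (squeue st) -> sg1 (eid e) = sg2 (eid e)) -> sg1 n = sg2 n ->
  stp sg1 ov st n = stp sg2 ov st n.
Proof.
move=> H Hn; case E: (ev n) => [|w].
- case Q: (squeue st) => [|a [|a' q]].
  + by rewrite !(stp_good0 _ _ E Q).
  + by rewrite !(stp_good1 _ _ E Q).
  + rewrite Q in H.
    have hb : forall x, List.In x (a :: a' :: q) -> bidof sg1 ov n x = bidof sg2 ov n x.
      by move=> x hx; rewrite /bidof (H _ hx).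
    have hw : winner sg1 ov n a (a' :: q) = winner sg2 ov n a (a' :: q).
      rewrite /winner; apply: foldl_in => [x y|x y hx hy]; first by case: ifP; auto.
      rewrite /better (hb _ hx) (hb y) //; by right.
    rewrite !(stp_good2 _ _ E Q) hw; congr (State _ _, _).
    apply: map_in => x /In_filter [hx _].
    by rewrite /updL /bidof (H _ hx).
- case: (posnP (sinv st)) => [z|p].
  + rewrite !(stp_surv _ _ E z) /=.
    have hp : forall s x, List.In x (rcons (squeue st) (newE n)) ->
        point sg1 ov n s x = point sg2 ov n s x.
      move=> s x /In_rcons [hx|->]; first by rewrite /point (H _ hx).
      by rewrite /point /= Hn.
    set s := vh _.
    rewrite (map_in (hp s)); congr (State _ (map _ _), _).
    by apply: filter_in => x hx; rewrite (hp s x hx).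
  + by rewrite !(stp_inv _ _ E p) Hn.
Qed.

Lemma step_congr_absent sg1 sg2 ov st n : absent st -> n <> i ->
  (forall j, j <> i -> sg1 j = sg2 j) -> stp sg1 ov st n = stp sg2 ov st n.
Proof.
move=> ab ni hs; apply: step_congr; last exact: hs.
by move=> e he; apply: hs; apply: ab.
Qed.

Lemma pre_surv sgA sgB S n w estar :
  (forall j, j <> i -> sgA j = sgB j) -> ev n = Buyer w -> sinv S = 0%N ->
  List.In estar (rcons (squeue S) (newE n)) -> eid estar = i ->
  (forall x, List.In x (rcons (squeue S) (newE n)) -> eid x = i -> x = estar) ->
  lep (point sgA None n (vh (size (squeue S))%:Z) estar)
      (point sgB None n (vh (size (squeue S))%:Z) estar) ->
  (stp sgA None S n).2 = [::] /\ (stp sgB None S n).2 = [::] /\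
  (((stp sgA None S n).1 = (stp sgB None S n).1 /\
    exists E, ltp E (point sgA None n (vh (size (squeue S))%:Z) estar) /\
      ltp E (point sgB None n (vh (size (squeue S))%:Z) estar) /\
      lep (vh (size (squeue S))%:Z, false) E /\
      List.In (updS n (vh (size (squeue S))%:Z) E.1 estar) (squeue (stp sgB None S n).1) /\
      forall e', List.In e' (squeue (stp sgB None S n).1) -> eid e' = i ->
        e' = updS n (vh (size (squeue S))%:Z) E.1 estar)
   \/ (absent (stp sgA None S n).1 /\
       forall e', List.In e' (squeue (stp sgB None S n).1) -> eid e' = i ->
         (point sgA None n (vh (size (squeue S))%:Z) estar).1 <= eres e')).
Proof.
move=> hs E z hin ei huq hP.
rewrite !(stp_surv _ _ E z) /=; split=> //; split=> //.
set s := vh (size (squeue S))%:Z in hP *.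
set q' := rcons (squeue S) (newE n) in hin huq *.
set init := (Num.max s _, false).
set PA := point sgA None n s estar in hP *.
set PB := point sgB None n s estar in hP *.
pose Rl (a b : entry) := a = b /\ List.In a q'.
have hq : pw Rl q' q' by apply: pw_refl => a ha; split.
have HP : forall a b, Rl a b -> (eid a = i -> point sgA None n s a = PA /\ point sgB None n s b = PB)
    /\ (eid a <> i -> point sgA None n s a = point sgB None n s b).
  move=> a b [<- ha]; split=> [ai|an]; first by rewrite (huq _ ha ai).
  exact: point_nonI ovok_None ovok_None hs an.
have := min2 init hP hq HP.
set EA := foldr _ init (map (point sgA None n s) q').
set EB := foldr _ init (map (point sgB None n s) q').
move=> hmin.
have lbB : lep (s, false) EB.
  by apply: foldr_lb; [exact: init_ge|move=> a _; exact: point_ge].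
case: (boolP (ltp EA PA)) => hlt.
- have eqE : EA = EB by case: hmin => // [[h _]]; rewrite h ltpxx in hlt.
  have hlB : ltp EB PB by rewrite -eqE; exact: ltp_lep_trans hlt hP.
  have hf : [seq e <- q' | ltp EA (point sgA None n s e)] =
            [seq e <- q' | ltp EB (point sgB None n s e)].
    apply: (pw_eq (P := Rl)); first by move=> a b [].
    apply: pw_filter hq => a b Rab; have [Hi Hn] := HP _ _ Rab.
    case: (eqVneq (eid a) i) => [ai|an].
    + have [-> ->] := Hi ai; by rewrite hlt hlB.
    + by rewrite (Hn (neq_ne an)) eqE.
  left; split; first by rewrite hf eqE.
  exists EB; split; first by rewrite -eqE.
  split=> //; split=> //; split.
  + by apply: In_mapI; apply: In_filterI.
  + move=> e' /In_map [x [hx ->]] /= xi.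
    by have [hx1 _] := In_filter hx; rewrite (huq _ hx1 xi).
- right; split.
  + move=> e' /In_map [x [hx ->]] /= xi.
    have [hx1 hx2] := In_filter hx.
    by move: hx2; rewrite (huq _ hx1 xi) -/PA (negbTE hlt).
  + move=> e' /In_map [x [hx ->]] /= xi.
    have [hx1 _] := In_filter hx.
    have lP : lep PA EB by case: hmin => [<-|[_ h]].
    rewrite le_max; apply/orP; right; exact: lep_fst lP.
Qed.

Lemma first_out sg : (exists n, isSome (outc sg n)) ->
  exists n', isSome (outc sg n') /\ forall m, (m < n')%N -> outc sg m = None.
Proof.
move=> ex; case: (ex_minnP ex) => n' hn' hmin; exists n'; split=> // m lt.
case E: (outc sg m) => [x|] //.
by have := hmin m; rewrite E leqNgt lt => /(_ isT).
Qed.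

Lemma payoff_absent sg v n0 : (i < n0)%N -> absent (run' sg n0) ->
  (forall m, (m < n0)%N -> outc sg m = None) -> payoff vh L ev tm tb sg i v = 0.
Proof.
move=> ik ab hb; apply: payoff_none => m.
case: (ltnP m n0) => [lt|le]; first exact: hb.
rewrite -(subnKC le); apply: outc_none; rewrite -res_run.
by have [] := absent_iter sg None (m - n0) ik ab.
Qed.

Lemma G sg v n0 : (i < n0)%N -> (forall m, (m < n0)%N -> outc sg m = None) ->
  (forall e, List.In e (squeue (run' sg n0)) -> eid e = i -> v <= eres e) ->
  payoff vh L ev tm tb sg i v <= 0.
Proof.
move=> ik hb hv.
case: (pselect (exists n, isSome (outc sg n))) => [ex|nex]; last first.
  rewrite payoff_none // => n; case E: (outc sg n) => [x|] //.
  by exfalso; apply: nex; exists n; rewrite E.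
have [n' [hn' nb]] := first_out ex.
have le : (n0 <= n')%N.
  by rewrite leqNgt; apply/negP => lt; move: hn'; rewrite hb.
have ni : n' <> i by move=> h; move: ik; rewrite -h ltnNge le.
have ik' : (i < n')%N by apply: leq_trans ik le.
have hw : i \in ids (stp sg None (run' sg n') n').2.
  by apply: outc_in; move: hn'; case: (outc sg n').
have mono : forall e, List.In e (squeue (run' sg n')) -> eid e = i -> v <= eres e.
  rewrite -(subnKC le) -iter_run; apply: monoinv_iter => //.
case: (res_i ni hw) => EG [[e [Q [ei Hx]]]|[e0 [e1 [q [Q [wi [win Hx]]]]]]].
- rewrite (payoff_at v nb (outc_some Hx)) /=; case: (present _ _ _) => //.
  have : List.In e (squeue (run' sg n')) by rewrite Q; left.
  move/mono => /(_ ei); lra.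
- set w := winner _ _ _ _ _ in wi win Hx *.
  rewrite (payoff_at v nb (outc_some Hx)) /=; case: (present _ _ _) => //.
  have := cutoff_ge (win_nonempty ik' win wi EG hw).
  have := mono _ win wi; lra.
Qed.

Lemma ltp_maxF (E : R * bool) s x : lep (s, false) E -> ltp E (Num.max s x, false) -> E.1 < x.
Proof.
case: E => e b; rewrite /lep /ltp /= !andbF !orbF -leNgt => se.
rewrite lt_max => /orP[es|//].
by have := le_lt_trans se es; rewrite ltxx.
Qed.

Lemma inv_facts sg ov st n w : ev n = Buyer w -> (0 < sinv st)%N -> n <> i ->
  squeue (stp sg ov st n).1 = squeue st /\ i \notin ids (stp sg ov st n).2.
Proof.
move=> E p ni; rewrite (stp_inv _ _ E p); case: ifP => _ //=.
by rewrite inE; split=> //; apply/eqP => h; apply: ni.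
Qed.

Section Final.
Variables (sig : nat -> strategy) (v : R) (s : strategy).
Hypotheses (Hv0 : 0 <= v) (Hi : ev i = Buyer v).

Local Notation St := (upd_strat sig i (truthful v)).
Local Notation Ss := (upd_strat sig i s).

Definition activeI (st : state) :=
  (exists e, List.In e (squeue st) /\ eid e = i) /\
  forall e, List.In e (squeue st) -> eid e = i -> estat e = Active R /\ eres e <= v.

Lemma pointT n x e : estat e = Active R -> eid e = i ->
  point St None n x e = (Num.max x v, false).
Proof. by move=> ea ei; rewrite /point /eff_stat ea ei St_i. Qed.

Lemma noout_S sg n : (forall m, (m < n)%N -> outc sg m = None) -> outc sg n = None ->
  forall m, (m < n.+1)%N -> outc sg m = None.
Proof. move=> h hn m; rewrite ltnS leq_eqVlt => /orP[/eqP ->//|]; exact: h. Qed.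

Lemma surv_active S n estar (E : R * bool) :
  List.In estar (squeue S) \/ estar = newE n -> eid estar = i ->
  estat estar = Active R -> eres estar <= v ->
  ltp E (point St None n (vh (size (squeue S))%:Z) estar) ->
  lep (vh (size (squeue S))%:Z, false) E ->
  forall (st' : state),
  List.In (updS n (vh (size (squeue S))%:Z) E.1 estar) (squeue st') ->
  (forall e', List.In e' (squeue st') -> eid e' = i ->
        e' = updS n (vh (size (squeue S))%:Z) E.1 estar) ->
  activeI st'.
Proof.
move=> _ ei ea ev' hl lb st' hin hall; split.
  by exists (updS n (vh (size (squeue S))%:Z) E.1 estar).
move=> e' he' e'i; rewrite (hall _ he' e'i) /=; split=> //.
rewrite ge_max ev'; apply: ltW; apply: ltp_maxF lb _.
by rewrite -(pointT n _ ea ei).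
Qed.

Lemma F0 : 0 <= payoff vh L ev tm tb St i v.
Proof.
suff H : forall n, 0 <= payoff vh L ev tm tb St i v \/
   ((forall m, (m < n)%N -> outc St m = None) /\
    (absent (run' St n) \/ ((i < n)%N /\ activeI (run' St n)))).
  case: (lerP 0 (payoff vh L ev tm tb St i v)) => // hneg.
  suff h0 : payoff vh L ev tm tb St i v = 0 by move: hneg; rewrite h0 ltxx.
  apply: payoff_none => m.
  case: (H m.+1) => [h|[nb _]]; first by have := lt_le_trans hneg h; rewrite ltxx.
  exact: nb.
elim=> [|n IH]; first by right; split=> //; left => e [].
case: IH => [|[nb [ab|[lt [[es [esin esi]] act]]]]]; first by left.
-
  case: (eqVneq n i) => [ni|ni]; last first.
    have [ab' hr] := absent_step St None (neq_ne ni) ab.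
    by right; split; [apply: noout_S nb (outc_none hr)|left].
  rewrite ni in nb ab *.
  case: (posnP (sinv (run' St i))) => [z|p].
  + have huq : forall x, List.In x (rcons (squeue (run' St i)) (newE i)) -> eid x = i -> x = newE i.
      by move=> x /In_rcons [hx|->] // xi; exfalso; apply: (ab x hx xi).
    have := pre_surv (@hsame St) Hi z (In_rcons_last _ _) erefl huq (lepxx _).
    move=> [r1 [_ [[eq1 [E [hl [_ [lb [hin hall]]]]]]|[ab2 _]]]].
    * right; split; first by apply: noout_S nb (outc_none _); rewrite r1.
      right; split=> //.
      exact: (surv_active (S:=run' St i) (n:=i) (or_intror erefl) erefl erefl Hv0 hl lb hin hall).
    * by right; split; [apply: noout_S nb (outc_none _); rewrite r1|left].
  + move: (stp_inv St None Hi p); rewrite St_i /=.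
    case: ifP => hp hst.
    * have ho : outc St i = Some (RBuy (vh (- (sinv (run' St i))%:Z))).
        by apply: outc_some; rewrite hst.
      by left; rewrite (payoff_at v nb ho) /= subr_ge0 ltW.
    * right; split; first by apply: noout_S nb (outc_none _); rewrite hst.
      by left; change (absent (stp St None (run' St i) i).1); rewrite hst.
-
  have ni : n <> i by move=> h; move: lt; rewrite h ltnn.
  have huq : forall x, List.In x (squeue (run' St n)) -> eid x = i -> x = es.
    by move=> x hx xi; exact: uniq_i hx esin xi esi.
  have [esA esv] := act _ esin esi.
  case E: (ev n) => [|w].
  + case Q: (squeue (run' St n)) => [|a [|a' q]].
    * by rewrite Q in esin.
    * have ain : List.In a (squeue (run' St n)) by rewrite Q; left.
      have ai : eid a = i by move: esin; rewrite Q => -[->|[]].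
      have ho : outc St n = Some (RGood (eres a) (present None a (tm n))).
        by apply: outc_some; rewrite (stp_good1 _ _ E Q) /= ai.
      left; rewrite (payoff_at v nb ho) /=.
      case: (present _ _ _) => //.
      by have [_ h] := act _ ain ai; rewrite subr_ge0.
    * left; apply: (T_ge0 (a:=n) (r:=eres es)) => //.
      - move=> e he ei; rewrite (huq _ he ei); split=> //; right.
        rewrite /eff_stat esA; split=> //; split=> //.
        by rewrite St_i /=; apply: max_r.
      - by move=> e he ei; rewrite (huq _ he ei).
  + case: (posnP (sinv (run' St n))) => [z|p].
    * have huq' : forall x, List.In x (rcons (squeue (run' St n)) (newE n)) -> eid x = i -> x = es.
        by move=> x /In_rcons [hx|->] xi; [exact: huq|exfalso; apply: ni].
      have := pre_surv (@hsame St) E z (In_rconsI _ esin) esi huq' (lepxx _).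
      move=> [r1 [_ [[eq1 [E' [hl [_ [lb [hin hall]]]]]]|[ab2 _]]]].
      - right; split; first by apply: noout_S nb (outc_none _); rewrite r1.
        right; split; first exact: ltnW.
        exact: (surv_active (or_introl esin) esi esA esv hl lb hin hall).
      - by right; split; [apply: noout_S nb (outc_none _); rewrite r1|left].
    * have [hq hr] := inv_facts St None E p ni.
      right; split; first exact: noout_S nb (outc_none hr).
      right; split; first exact: ltnW.
      change (activeI (stp St None (run' St n) n).1); rewrite /activeI hq.
      by split; [exists es|exact: act].
Qed.



Lemma hsST' j : j <> i -> Ss j = St j.
Proof. by move=> h; rewrite (@hsTS sig v s j h). Qed.

Lemma surv_case n w estar :
  (i <= n)%N -> ev n = Buyer w -> sinv (run' St n) = 0%N -> run' Ss n = run' St n ->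
  List.In estar (rcons (squeue (run' St n)) (newE n)) -> eid estar = i ->
  estat estar = Active R -> eres estar <= v ->
  (forall x, List.In x (rcons (squeue (run' St n)) (newE n)) -> eid x = i -> x = estar) ->
  (forall m, (m < n)%N -> outc St m = None /\ outc Ss m = None) ->
  payoff vh L ev tm tb Ss i v <= payoff vh L ev tm tb St i v \/
  (outc St n = None /\ outc Ss n = None /\ run' Ss n.+1 = run' St n.+1 /\
   activeI (run' St n.+1)).
Proof.
move=> le E z eqr hin ei ea ev' huq nb.
have nbT : forall m, (m < n)%N -> outc St m = None by move=> m /nb [].
have nbS : forall m, (m < n)%N -> outc Ss m = None by move=> m /nb [].
have ik : (i < n.+1)%N by rewrite ltnS.
have hinS : List.In estar (squeue (run' St n)) \/ estar = newE n by case: (In_rcons hin); auto.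
have runS1 : run' Ss n.+1 = (stp Ss None (run' St n) n).1 by rewrite -eqr.
have outS : forall x, (stp Ss None (run' St n) n).2 = x -> (stp Ss None (run' Ss n) n).2 = x.
  by move=> x; rewrite eqr.
set S := run' St n in z eqr hin huq hinS runS1 outS *.
set PT := point St None n (vh (size (squeue S))%:Z) estar.
set PS := point Ss None n (vh (size (squeue S))%:Z) estar.
case/orP: (lep_total PT PS) => hP.
- have := pre_surv (@hsTS sig v s) E z hin ei huq hP.
  move=> [r1 [r2 [[eq1 [E' [hl [_ [lb [hin' hall]]]]]]|[ab2 hge]]]].
  + right; split; first by apply: outc_none; rewrite r1.
    split; first by apply: outc_none; rewrite (outS _ r2).
    split; first by rewrite runS1 -eq1.
    change (activeI (stp St None S n).1); rewrite eq1.
    exact: (surv_active hinS ei ea ev' hl lb hin' hall).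
  + left; apply: le_trans _ F0.
    apply: (G (n0 := n.+1)) => //.
    * apply: noout_S nbS _; apply: outc_none; by rewrite (outS _ r2).
    * move=> e he e'i; rewrite runS1 in he; have := hge _ he e'i.
      rewrite /PT (pointT _ _ ea ei) /=; apply: le_trans; by rewrite le_max lexx orbT.
- have := pre_surv hsST' E z hin ei huq hP.
  move=> [r1 [r2 [[eq1 [E' [_ [hl [lb [hin' hall]]]]]]|[ab2 hge]]]].
  + right; split; first by apply: outc_none; rewrite r2.
    split; first by apply: outc_none; rewrite (outS _ r1).
    split; first by rewrite runS1 eq1.
    exact: (surv_active hinS ei ea ev' hl lb hin' hall).
  + left; rewrite (@payoff_absent Ss v n.+1) //; first exact: F0.
    * by rewrite runS1.
    * apply: noout_S nbS _; apply: outc_none; by rewrite (outS _ r1).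
Qed.

Lemma inv_pay sg : absent (run' sg i) -> (forall m, (m < i)%N -> outc sg m = None) ->
  (0 < sinv (run' sg i))%N ->
  payoff vh L ev tm tb sg i v =
  if accept (sg i) [:: OArr (tm i)] (vh (- (sinv (run' sg i))%:Z))
  then v - vh (- (sinv (run' sg i))%:Z) else 0.
Proof.
move=> ab nb p; have := stp_inv sg None Hi p; case: ifP => ha hst.
- have ho : outc sg i = Some (RBuy (vh (- (sinv (run' sg i))%:Z))).
    by apply: outc_some; rewrite hst.
  by rewrite (payoff_at v nb ho).
- apply: (@payoff_absent sg v i.+1) => //.
  + by change (absent (stp sg None (run' sg i) i).1); rewrite hst.
  + by apply: noout_S nb _; apply: outc_none; rewrite hst.
Qed.

Lemma main_le : payoff vh L ev tm tb Ss i v <= payoff vh L ev tm tb St i v.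
Proof.
suff H : forall n, payoff vh L ev tm tb Ss i v <= payoff vh L ev tm tb St i v \/
   ((forall m, (m < n)%N -> outc St m = None /\ outc Ss m = None) /\
    run' Ss n = run' St n /\
    (((n <= i)%N /\ absent (run' St n)) \/ ((i < n)%N /\ activeI (run' St n)))).
  case: (lerP (payoff vh L ev tm tb Ss i v) (payoff vh L ev tm tb St i v)) => // hgt.
  have nb : forall m, outc St m = None /\ outc Ss m = None.
    move=> m; case: (H m.+1) => [h|[nb _]]; last exact: nb m (ltnSn m).
    by have := lt_le_trans hgt h; rewrite ltxx.
  have h1 : payoff vh L ev tm tb Ss i v = 0 by apply: payoff_none => m; case: (nb m).
  have h2 : payoff vh L ev tm tb St i v = 0 by apply: payoff_none => m; case: (nb m).
  by move: hgt; rewrite h1 h2 ltxx.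
elim=> [|n IH]; first by right; split=> //; split=> //; left; split=> // e [].
case: IH => [|[nb [eqr [[le ab]|[lt [[es [esin esi]] act]]]]]]; first by left.
- have nbT : forall m, (m < n)%N -> outc St m = None by move=> m /nb [].
  have nbS : forall m, (m < n)%N -> outc Ss m = None by move=> m /nb [].
  case: (eqVneq n i) => [ni|ni]; last first.
  + have ni' : n <> i := neq_ne ni.
    have hc : stp Ss None (run' St n) n = stp St None (run' St n) n.
      exact: step_congr_absent ab ni' hsST'.
    have [ab' hr] := absent_step St None ni' ab.
    right; split.
      move=> m; rewrite ltnS leq_eqVlt => /orP[/eqP ->|lt']; last exact: nb.
      split; first exact: outc_none hr.
      by apply: outc_none; rewrite eqr hc.
    split.
      by change ((stp Ss None (run' Ss n) n).1 = (stp St None (run' St n) n).1); rewrite eqr hc.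
    by left; split; [rewrite ltn_neqAle ni le|exact: ab'].
  + rewrite ni in nb nbT nbS eqr ab *.
    case: (posnP (sinv (run' St i))) => [z|p].
    * have huq : forall x, List.In x (rcons (squeue (run' St i)) (newE i)) -> eid x = i -> x = newE i.
        by move=> x /In_rcons [hx|->] // xi; exfalso; apply: (ab x hx xi).
      case: (surv_case (n:=i) (w:=v) (leqnn i) Hi z eqr (In_rcons_last _ _) erefl erefl Hv0 huq nb)
        => [|[o1 [o2 [eq1 act1]]]]; first by left.
      right; split.
        by move=> m; rewrite ltnS leq_eqVlt => /orP[/eqP ->|lt']; [split|exact: nb].
      by split=> //; right; split.
    * left.
      have abS : absent (run' Ss i) by rewrite eqr.
      have pS : (0 < sinv (run' Ss i))%N by rewrite eqr.
      rewrite (inv_pay abS nbS pS) (inv_pay ab nbT p) eqr St_i /=.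
      set p' := vh _.
      case: (accept _ _ _); case: ifP => h.
      -- exact: lexx.
      -- by move/negbT: h; rewrite -leNgt subr_le0.
      -- by rewrite subr_ge0 ltW.
      -- exact: lexx.
- have nbT : forall m, (m < n)%N -> outc St m = None by move=> m /nb [].
  have nbS : forall m, (m < n)%N -> outc Ss m = None by move=> m /nb [].
  have ni : n <> i by move=> h; move: lt; rewrite h ltnn.
  have huq : forall x, List.In x (squeue (run' St n)) -> eid x = i -> x = es.
    by move=> x hx xi; exact: uniq_i hx esin xi esi.
  have [esA esv] := act _ esin esi.
  case E: (ev n) => [|w].
  + case Q: (squeue (run' St n)) => [|a [|a' q]].
    * by rewrite Q in esin.
    * have ai : eid a = i by move: esin; rewrite Q => -[->|[]].
      have hoT : outc St n = Some (RGood (eres a) (present None a (tm n))).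
        by apply: outc_some; rewrite (stp_good1 _ _ E Q) /= ai.
      have QS : squeue (run' Ss n) = [:: a] by rewrite eqr.
      have hoS : outc Ss n = Some (RGood (eres a) (present None a (tm n))).
        by apply: outc_some; rewrite (stp_good1 _ _ E QS) /= ai.
      by left; rewrite (payoff_at v nbT hoT) (payoff_at v nbS hoS) /=.
    * by left; apply: (UB (a:=n) (r:=eres es) (estar:=es)).
  + case: (posnP (sinv (run' St n))) => [z|p].
    * have huq' : forall x, List.In x (rcons (squeue (run' St n)) (newE n)) -> eid x = i -> x = es.
        by move=> x /In_rcons [hx|->] xi; [exact: huq|exfalso; apply: ni].
      case: (surv_case (n:=n) (w:=w) (ltnW lt) E z eqr (In_rconsI _ esin) esi esA esv huq' nb)
        => [|[o1 [o2 [eq1 act1]]]]; first by left.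
      right; split.
        by move=> m; rewrite ltnS leq_eqVlt => /orP[/eqP ->|lt']; [split|exact: nb].
      by split=> //; right; split=> //; apply: ltnW.
    * have pS : (0 < sinv (run' Ss n))%N by rewrite eqr.
      have hc : stp Ss None (run' Ss n) n = stp St None (run' St n) n.
        by rewrite eqr !(stp_inv _ _ E p) (@hsTS sig v s n ni).
      have [hq hr] := inv_facts St None E p ni.
      right; split.
        move=> m; rewrite ltnS leq_eqVlt => /orP[/eqP ->|lt']; last exact: nb.
        split; first exact: outc_none hr.
        by apply: outc_none; rewrite hc.
      split; first by change ((stp Ss None (run' Ss n) n).1 = (stp St None (run' St n) n).1); rewrite hc.
      right; split; first exact: ltnW.
      change (activeI (stp St None (run' St n) n).1); rewrite /activeI hq.
      by split; [exists es|exact: act].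
Qed.


End Final.
End Main.
End CPMProof.

Unset Implicit Arguments.

Theorem theorem3 (R : realType) (K L : nat) (th : int -> R)
  (F f : R -> R) (v0 : R)
  (Hth : forall a b : int, - (L%:Z) <= a -> a < b -> b <= K%:Z ->
           a != 0 -> b != 0 -> th a < th b)
  (Hth1 : forall a : int, - (L%:Z) <= a <= K%:Z -> a != 0 -> th a < 1)
  (Hv0 : 0 <= v0 <= 1) (HJ : v0 - (1 - F v0) / f v0 = 0)
  (ev : nat -> event R) (tm : nat -> R) (tb : nat -> nat -> nat)
  (Htm : forall n, tm n < tm n.+1)
  (Hval : forall n w, ev n = Buyer w -> 0 <= w <= 1)
  (sig : nat -> strategy R) (i : nat) (v : R) (Hi : ev i = Buyer v)
  (s : strategy R) :
  payoff (vhat th K v0) L ev tm tb (upd_strat sig i s) i v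
  <= payoff (vhat th K v0) L ev tm tb (upd_strat sig i (truthful v)) i v.
Proof.
have /andP[v0le _] := Hval i v Hi.
exact: (@CPMProof.main_le R (vhat th K v0) L ev tm tb i sig v s v0le Hi).
Qed.
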